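(* (i) Let $(X_n)$ be a norm-bounded sequence in $B(\mathcal H)^d$ and, for each $n$, let $\widetilde{X_n}$ be any shift form of $X_n$. Then there is a subsequence along which $\widetilde{X_n}$ converges in the strong operator topology. In particular, for every bounded sequence $(X_n)$ in $B(\mathcal H)^d$ there exist unitaries $U_n\in B(\mathcal H)$ such that $U_n^*X_nU_n$ converges in SOT along a subsequence. (ii) Let $X\in B(\mathcal H)^d$ and let $H_n\in B(\mathcal H)^d$ with $\|H_n\|=1$ for all $n$. Then there exist unitaries $W_n\in B(\mathcal H)$, a point $(X',H')\in B(\mathcal H)^{2d}$ with $H'\ne0$, and a subsequence along which $W_n^*(X,H_n)W_n\to(X',H')$ in SOT.
   Context: $\mathcal H$ is an infinite-dimensional separable complex Hilbert space with a fixed orthonormal basis $e_1,e_2,\dots$, and $M\in B(\mathcal H)$ is the shift $Me_j=e_{j+1}$. $B(\mathcal H)^d$ has the norm $\|x\|=\max_i\|x^i\|$; SOT on $B(\mathcal H)^d$ is coordinatewise strong operator convergence; for a unitary $W$, $W^*(X,H)W=(W^*X^1W,\dots,W^*X^dW,W^*H^1W,\dots,W^*H^dW)$. For $X=(X^1,\dots,X^d)\in B(\mathcal H)^d$, $(X,M)$ denotes the $(d+1)$-tuple $(X^1,\dots,X^d,M)$. $\mathcal P(k,d)$ is the complex vector space of polynomials in $d+1$ noncommuting variables of degree at most $k$, and $\alpha(k,d)=\dim\mathcal P(k,d)$. For $k\ge0$, $V_k^X:=\{p(X,M)e_1: p\in\mathcal P(k,d)\}$. A shift form of $X$ is a tuple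 $\widetilde X=u^*Xu$ where $u\in B(\mathcal H)$ is a unitary such that for every $k\ge0$, $u(\mathrm{span}\{e_1,\dots,e_{k+1}\})\subset V_k^X$ and $u^*(V_k^X)\subset\mathrm{span}\{e_1,\dots,e_{\alpha(k,d)}\}$. (Every $X$ has at least one shift form.) *)

(* Defs.v *)
(* The orthonormal basis e_1, e_2, ... of the paper is eb 0, eb 1, ...
   (0-indexed: e_(j+1) = eb j). *)
From Stdlib Require Import Reals List Lia.
Open Scope R_scope.

Definition C : Type := (R * R)%type.
Definition C0 : C := (0, 0).
Definition C1 : C := (1, 0).
Definition Cadd (a b : C) : C := (fst a + fst b, snd a + snd b).
Definition Copp (a : C) : C := (- fst a, - snd a).
Definition Cmul (a b : C) : C :=
  (fst a * fst b - snd a * snd b, fst a * snd b + snd a * fst b).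
Definition Cnorm2 (a : C) : R := fst a * fst a + snd a * snd a.

Definition vec : Type := nat -> C.
Definition vadd (x y : vec) : vec := fun k => Cadd (x k) (y k).
Definition vsub (x y : vec) : vec := fun k => Cadd (x k) (Copp (y k)).
Definition vscale (a : C) (x : vec) : vec := fun k => Cmul a (x k).
Definition vzero : vec := fun _ => C0.

Definition vnorm_le (x : vec) (r : R) : Prop :=
  0 <= r /\ forall n, sum_f_R0 (fun i => Cnorm2 (x i)) n <= r * r.

Definition l2 (x : vec) : Prop := exists r, vnorm_le x r.

Definition eb (j : nat) : vec := fun k => if Nat.eqb k j then C1 else C0.

(* An operator is a map on sequences; only its restriction to l^2 matters. *)
Definition op : Type := vec -> vec.

Definition opnorm_le (T : op) (c : R) : Prop :=
  forall x r, vnorm_le x r -> vnorm_le (T x) (c * r).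

Definition is_op (T : op) : Prop :=
  (forall (a : C) (x y : vec), l2 x -> l2 y ->
     forall k, T (vadd (vscale a x) y) k = vadd (vscale a (T x)) (T y) k)
  /\ exists c, opnorm_le T c.

Definition Mshift : op := fun x k => match k with O => C0 | S k' => x k' end.

(* A unitary u is represented together with its adjoint u^* = u^(-1):
   a pair (u, v) of bounded operators, mutually inverse on H, with u
   isometric (i.e. u is a surjective isometry, v = u^* ). *)
Definition is_unitary (u v : op) : Prop :=
  is_op u /\ is_op v /\
  (forall x, l2 x -> forall k, v (u x) k = x k) /\
  (forall x, l2 x -> forall k, u (v x) k = x k) /\
  (forall x r, vnorm_le x r <-> vnorm_le (u x) r).

(* An element of B(H)^d is a family X : nat -> op, of which X 0..X (d-1)
   are the coordinates X^1..X^d. *)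
Definition tuple : Type := nat -> op.
Definition is_tuple (d : nat) (X : tuple) : Prop := forall i, (i < d)%nat -> is_op (X i).

Definition tnorm_le (d : nat) (X : tuple) (c : R) : Prop :=
  forall i, (i < d)%nat -> opnorm_le (X i) c.

Definition tnorm_eq (d : nat) (X : tuple) (c : R) : Prop :=
  tnorm_le d X c /\ forall c', tnorm_le d X c' -> c <= c'.

Definition conj_tuple (u v : op) (X : tuple) : tuple :=
  fun i x => v (X i (u x)).

Definition sot_conv_sub (d : nat) (Z : nat -> tuple) (phi : nat -> nat) (Y : tuple) : Prop :=
  forall i, (i < d)%nat -> forall x, l2 x ->
    forall eps, 0 < eps -> exists N, forall n, (N <= n)%nat ->
      vnorm_le (vsub (Z (phi n) i x) (Y i x)) eps.

Definition strictly_incr (phi : nat -> nat) : Prop := forall n, (phi n < phi (S n))%nat.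

(* Letters 0..d-1 stand for X^1..X^d, letter d for M.  A monomial (word)
   [a1; ...; am] is evaluated as the operator product a1 a2 ... am. *)
Definition letter_op (d : nat) (X : tuple) (a : nat) : op :=
  if Nat.eqb a d then Mshift else X a.

Fixpoint word_eval (d : nat) (X : tuple) (w : list nat) (x : vec) : vec :=
  match w with
  | nil => x
  | a :: w' => letter_op d X a (word_eval d X w' x)
  end.

Definition poly : Type := list (C * list nat).

Definition poly_in_P (k d : nat) (p : poly) : Prop :=
  forall cw, In cw p -> (length (snd cw) <= k)%nat /\
                        forall a, In a (snd cw) -> (a <= d)%nat.

Fixpoint poly_eval (d : nat) (X : tuple) (p : poly) (x : vec) : vec :=
  match p with
  | nil => vzero
  | (c, w) :: p' => vadd (vscale c (word_eval d X w x)) (poly_eval d X p' x)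
  end.

Definition inVk (d : nat) (X : tuple) (k : nat) (v : vec) : Prop :=
  exists p, poly_in_P k d p /\ forall m, v m = poly_eval d X p (eb 0) m.

(* alpha(k,d) = dim P(k,d) = number of words of length <= k in d+1 letters
   = sum_{j=0}^k (d+1)^j *)
Fixpoint alpha (k d : nat) : nat :=
  match k with
  | O => 1
  | S k' => (alpha k' d + Nat.pow (S d) k)%nat
  end.

Definition in_span_first (n : nat) (x : vec) : Prop :=
  forall m, (n <= m)%nat -> x m = C0.

Definition shift_form_unitary (d : nat) (X : tuple) (u v : op) : Prop :=
  is_unitary u v /\
  forall k : nat,
    (forall x, in_span_first (S k) x -> inVk d X k (u x)) /\
    (forall y, inVk d X k y -> in_span_first (alpha k d) (v y)).

(* Main.v *)
Require Import Defs.
From Stdlib Require Import Reals Lra Lia Classical ClassicalEpsilon FunctionalExtensionality List Cantor.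
From Coquelicot Require Import Coquelicot.
Import Defs.
Open Scope R_scope.

Lemma Cext : forall a b : C, fst a = fst b -> snd a = snd b -> a = b.
Proof. intros [a1 a2] [b1 b2]; simpl; intros; subst; reflexivity. Qed.

Ltac cring := apply Cext; simpl; ring.

Lemma Cnorm2_ge0 : forall a, 0 <= Cnorm2 a.
Proof. intros [a b]; unfold Cnorm2; simpl; nra. Qed.

Lemma Cnorm2_0 : forall a, Cnorm2 a = 0 -> a = C0.
Proof. intros [a b]; unfold Cnorm2, C0; simpl; intros. apply Cext; simpl; nra. Qed.

Lemma SerU : forall (a : nat -> R) l, Un_cv (fun n => sum_f_R0 a n) l -> Series a = l.
Proof. intros. apply is_series_unique. apply is_series_Reals. exact H. Qed.

Lemma exs_cv : forall (a : nat -> R) l, Un_cv (fun n => sum_f_R0 a n) l -> ex_series a.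
Proof. intros. exists l. apply is_series_Reals. exact H. Qed.

Lemma cv_exs : forall a : nat -> R, ex_series a -> Un_cv (fun n => sum_f_R0 a n) (Series a).
Proof. intros. apply is_series_Reals. apply Series_correct. auto. Qed.

Lemma exs_abs : forall a b : nat -> R, (forall n, Rabs (a n) <= b n) -> ex_series b -> ex_series a.
Proof. intros. apply (ex_series_le a b); auto. Qed.

Lemma exs_plus : forall a b : nat -> R, ex_series a -> ex_series b -> ex_series (fun n => a n + b n).
Proof. intros. apply cv_exs in H; apply cv_exs in H0. eapply exs_cv.
  eapply Un_cv_ext. 2: apply (CV_plus _ _ _ _ H H0). intro; simpl. rewrite sum_plus; auto. Qed.

Lemma Ser_plus : forall a b : nat -> R, ex_series a -> ex_series b -> Series (fun n => a n + b n) = Series a + Series b.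
Proof. intros. apply cv_exs in H; apply cv_exs in H0. apply SerU.
  eapply Un_cv_ext. 2: apply (CV_plus _ _ _ _ H H0). intro; simpl. rewrite sum_plus; auto. Qed.

Lemma cv_const : forall c : R, Un_cv (fun _ => c) c.
Proof. intros c e He. exists O. intros. unfold R_dist. rewrite Rminus_diag, Rabs_R0. auto. Qed.

Lemma sum_scal : forall (a : nat -> R) (c : R) n, sum_f_R0 (fun k => c * a k) n = c * sum_f_R0 a n.
Proof. intros. induction n; simpl; [ring| rewrite IHn; ring]. Qed.

Lemma exs_scal : forall (a : nat -> R) (c : R), ex_series a -> ex_series (fun n => c * a n).
Proof. intros. apply cv_exs in H. eapply exs_cv.
  eapply Un_cv_ext. 2: apply (CV_mult _ _ _ _ (cv_const c) H). intro; simpl. rewrite sum_scal; auto. Qed.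

Lemma Ser_scal : forall (a : nat -> R) (c : R), ex_series a -> Series (fun n => c * a n) = c * Series a.
Proof. intros. apply cv_exs in H. apply SerU.
  eapply Un_cv_ext. 2: apply (CV_mult _ _ _ _ (cv_const c) H). intro; simpl. rewrite sum_scal; auto. Qed.

Lemma exs_ext : forall a b : nat -> R, (forall n, a n = b n) -> ex_series a -> ex_series b.
Proof. intros. apply cv_exs in H0. eapply exs_cv. eapply Un_cv_ext. 2: exact H0.
  intro. apply sum_eq. intros; auto. Qed.

Lemma Ser_ext : forall a b : nat -> R, (forall n, a n = b n) -> Series a = Series b.
Proof. intros. apply Series_ext; auto. Qed.

Lemma sum_growing : forall a, (forall n, 0 <= a n) -> Un_growing (fun n => sum_f_R0 a n).
Proof. intros a H n. simpl. specialize (H (S n)). lra. Qed.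

Lemma exs_pos : forall (a : nat -> R) B, (forall n, 0 <= a n) -> (forall n, sum_f_R0 a n <= B) ->
  ex_series a /\ Series a <= B /\ forall n, sum_f_R0 a n <= Series a.
Proof. intros.
  assert (Hg := sum_growing a H).
  destruct (growing_cv _ Hg) as [l Hl]. { exists B. intros x [n ->]. auto. }
  assert (Series a = l) by (apply SerU; auto). subst l.
  split. eapply exs_cv; eauto. split.
  - apply Rnot_lt_le; intro. assert (Hpos: 0 < Series a - B) by lra.
    destruct (Hl _ Hpos) as [N HN]. specialize (HN N (le_n _)). specialize (H0 N).
    unfold R_dist in HN. rewrite Rabs_left1 in HN by (apply Rle_minus; apply (growing_ineq _ _ Hg Hl)). lra.
  - apply growing_ineq; auto. Qed.

Lemma ps_le_Ser : forall a : nat -> R, (forall n, 0 <= a n) -> ex_series a -> forall n, sum_f_R0 a n <= Series a.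
Proof. intros. apply growing_ineq. apply sum_growing; auto. apply cv_exs; auto. Qed.

Lemma Ser_ge0 : forall a : nat -> R, (forall n, 0 <= a n) -> ex_series a -> 0 <= Series a.
Proof. intros. eapply Rle_trans. 2: apply (ps_le_Ser a H H0 0). simpl. auto. Qed.

Definition sq (x : vec) : nat -> R := fun k => Cnorm2 (x k).
Definition nrm2 (x : vec) : R := Series (sq x).

Lemma sq_ge0 : forall x k, 0 <= sq x k.
Proof. intros; apply Cnorm2_ge0. Qed.

Lemma ps_ge0 : forall x n, 0 <= sum_f_R0 (sq x) n.
Proof. intros. induction n; simpl. apply sq_ge0. pose proof (sq_ge0 x (S n)); lra. Qed.

Lemma vnorm_le_l2 : forall x r, vnorm_le x r -> l2 x.
Proof. intros. exists r; auto. Qed.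

Lemma l2_exs : forall x, l2 x -> ex_series (sq x).
Proof. intros x [r [Hr H]]. destruct (exs_pos (sq x) (r*r) (sq_ge0 x) H) as [? _]; auto. Qed.

Lemma ps_le_nrm2 : forall x, l2 x -> forall n, sum_f_R0 (sq x) n <= nrm2 x.
Proof. intros. apply ps_le_Ser. apply sq_ge0. apply l2_exs; auto. Qed.

Lemma nrm2_ge0 : forall x, l2 x -> 0 <= nrm2 x.
Proof. intros. eapply Rle_trans. apply (ps_ge0 x 0). apply ps_le_nrm2; auto. Qed.

Lemma vnorm_le_iff : forall x r, l2 x -> (vnorm_le x r <-> 0 <= r /\ nrm2 x <= r * r).
Proof. intros x r Hx. split.
  - intros [Hr H]. split; auto. destruct (exs_pos (sq x) (r*r) (sq_ge0 x) H) as [_ [? _]]; auto.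
  - intros [Hr H]. split; auto. intro n. eapply Rle_trans. apply ps_le_nrm2; auto. auto. Qed.

Lemma vnorm_mono : forall x r s, vnorm_le x r -> r <= s -> vnorm_le x s.
Proof. intros x r s [Hr H] Hrs. split. lra. intro n. eapply Rle_trans. apply H. nra. Qed.

Lemma l2_of_bound : forall x B, (forall n, sum_f_R0 (sq x) n <= B) -> l2 x /\ nrm2 x <= B.
Proof. intros. assert (0 <= B). { eapply Rle_trans. apply (ps_ge0 x 0). auto. }
  split. exists (sqrt B). split. apply sqrt_pos. intro n. rewrite sqrt_sqrt; auto.
  destruct (exs_pos (sq x) B (sq_ge0 x) H) as [_ [? _]]; auto. Qed.

Definition cross (x y : vec) : nat -> R := fun k => fst (x k) * fst (y k) + snd (x k) * snd (y k).

Lemma pt_bound : forall a b c d t, 0 < t -> 2*(a*c+b*d) <= t*(a*a+b*b) + /t*(c*c+d*d).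
Proof. intros. assert (0 < / t) by (apply Rinv_0_lt_compat; auto).
  assert (0 <= / t * ((t * a - c) * (t * a - c) + (t * b - d) * (t*b - d))) by (apply Rmult_le_pos; [lra | pose proof (Rle_0_sqr (t*a-c)); pose proof (Rle_0_sqr (t*b-d)); unfold Rsqr in *; lra]).
  replace (/ t * ((t * a - c) * (t * a - c) + (t * b - d) * (t * b - d))) with
    (t * (a*a+b*b) - 2 * (a*c+b*d) + /t * (c*c+d*d)) in H1 by (field; lra).
  lra. Qed.

Lemma cross_bound : forall x y n t, 0 < t ->
  2 * sum_f_R0 (cross x y) n <= t * sum_f_R0 (sq x) n + / t * sum_f_R0 (sq y) n.
Proof. intros. induction n; simpl; unfold cross, sq, Cnorm2.
  - apply pt_bound; auto.
  - unfold cross, sq, Cnorm2 in IHn. pose proof (pt_bound (fst (x (S n))) (snd (x (S n))) (fst (y (S n))) (snd (y (S n))) t H). lra. Qed.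

Lemma cross_le_pos : forall x y n r s, 0 < r -> 0 < s ->
  sum_f_R0 (sq x) n <= r * r -> sum_f_R0 (sq y) n <= s * s ->
  sum_f_R0 (cross x y) n <= r * s.
Proof. intros.
  assert (Ht : 0 < s / r) by (apply Rdiv_lt_0_compat; lra).
    pose proof (cross_bound x y n _ Ht). rewrite Rinv_div in H3.
    assert (s / r * sum_f_R0 (sq x) n <= s / r * (r * r)) by (apply Rmult_le_compat_l; lra).
    assert (r / s * sum_f_R0 (sq y) n <= r / s * (s * s)).
    { apply Rmult_le_compat_l; auto. apply Rdiv_le_0_compat; lra. }
    replace (s / r * (r * r)) with (r * s) in H4 by (field; lra).
    replace (r / s * (s * s)) with (r * s) in H5 by (field; lra). lra. Qed.

Lemma cross_le : forall x y n r s, 0 <= r -> 0 <= s ->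
  sum_f_R0 (sq x) n <= r * r -> sum_f_R0 (sq y) n <= s * s ->
  sum_f_R0 (cross x y) n <= r * s.
Proof. intros. apply Rnot_lt_le; intro.
  set (P := sum_f_R0 (cross x y) n) in *.
  set (e := Rmin 1 ((P - r * s) / (r + s + 2))).
  assert (He : 0 < e). { unfold e. apply Rmin_glb_lt. lra. apply Rdiv_lt_0_compat; lra. }
  assert (He1 : e <= 1) by apply Rmin_l.
  assert (He2 : e <= (P - r*s) / (r+s+2)) by apply Rmin_r.
  assert (P <= (r+e)*(s+e)). { apply cross_le_pos; try lra; eapply Rle_trans; eauto; nra. }
  assert (e * (r + s + 2) <= P - r * s).
  { apply (Rmult_le_reg_r (/ (r+s+2))). apply Rinv_0_lt_compat; lra.
    rewrite Rmult_assoc, Rinv_r by lra. unfold Rdiv in He2. lra. }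
  nra. Qed.

Lemma sq_add : forall x y k, sq (vadd x y) k = sq x k + sq y k + 2 * cross x y k.
Proof. intros. unfold sq, cross, vadd, Cadd, Cnorm2; simpl. ring. Qed.

Lemma vnorm_add : forall x y r s, vnorm_le x r -> vnorm_le y s -> vnorm_le (vadd x y) (r + s).
Proof. intros x y r s [Hr Hx] [Hs Hy]. split. lra. intro n.
  assert (sum_f_R0 (sq (vadd x y)) n = sum_f_R0 (sq x) n + sum_f_R0 (sq y) n + 2 * sum_f_R0 (cross x y) n).
  { induction n; simpl; rewrite ?IHn, !sq_add; ring. }
  change (sum_f_R0 (fun i => Cnorm2 (vadd x y i)) n) with (sum_f_R0 (sq (vadd x y)) n). rewrite H.
  pose proof (cross_le x y n r s Hr Hs (Hx n) (Hy n)).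
  specialize (Hx n); specialize (Hy n). change (sum_f_R0 (fun i => Cnorm2 (x i)) n) with (sum_f_R0 (sq x) n) in Hx.
  change (sum_f_R0 (fun i => Cnorm2 (y i)) n) with (sum_f_R0 (sq y) n) in Hy. nra. Qed.

Lemma sq_scale : forall a x k, sq (vscale a x) k = Cnorm2 a * sq x k.
Proof. intros. unfold sq, vscale, Cmul, Cnorm2; simpl. ring. Qed.

Lemma sum_sq_scale : forall a x n, sum_f_R0 (sq (vscale a x)) n = Cnorm2 a * sum_f_R0 (sq x) n.
Proof. intros. induction n; simpl; rewrite ?IHn, !sq_scale; ring. Qed.

Lemma vnorm_scale : forall a x r s, vnorm_le x r -> 0 <= s -> Cnorm2 a <= s * s -> vnorm_le (vscale a x) (s * r).
Proof. intros a x r s [Hr H] Hs Ha. split. nra. intro n.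
  change (sum_f_R0 (fun i => Cnorm2 (vscale a x i)) n) with (sum_f_R0 (sq (vscale a x)) n).
  rewrite sum_sq_scale. specialize (H n). pose proof (ps_ge0 x n).
  change (sum_f_R0 (fun i => Cnorm2 (x i)) n) with (sum_f_R0 (sq x) n) in H.
  pose proof (Cnorm2_ge0 a).
  apply Rle_trans with (s * s * (r * r)). apply Rmult_le_compat; auto. nra. Qed.

Lemma Cnorm2_bound : forall a, Cnorm2 a <= sqrt (Cnorm2 a) * sqrt (Cnorm2 a).
Proof. intros. rewrite sqrt_sqrt. lra. apply Cnorm2_ge0. Qed.

Lemma l2_add : forall x y, l2 x -> l2 y -> l2 (vadd x y).
Proof. intros x y [r Hr] [s Hs]. exists (r+s). apply vnorm_add; auto. Qed.

Lemma l2_scale : forall a x, l2 x -> l2 (vscale a x).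
Proof. intros a x [r Hr]. exists (sqrt (Cnorm2 a) * r). apply vnorm_scale; auto. apply sqrt_pos. apply Cnorm2_bound. Qed.

Lemma vnorm_zero : forall r, 0 <= r -> vnorm_le vzero r.
Proof. intros. split; auto. intro n.
  assert (sum_f_R0 (fun i => Cnorm2 (vzero i)) n = 0).
  { induction n; simpl; [|rewrite IHn]; unfold vzero, C0, Cnorm2; simpl; ring. }
  rewrite H0. nra. Qed.

Lemma l2_zero : l2 vzero.
Proof. exists 0. apply vnorm_zero. lra. Qed.

Lemma vsub_eq : forall x y, vsub x y = vadd x (vscale (Copp C1) y).
Proof. intros. apply functional_extensionality; intro k. unfold vsub, vadd, vscale. apply Cext; unfold Copp, C1, Cmul, Cadd; simpl; ring. Qed.

Lemma l2_sub : forall x y, l2 x -> l2 y -> l2 (vsub x y).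
Proof. intros. rewrite vsub_eq. apply l2_add; auto. apply l2_scale; auto. Qed.

Lemma Cnorm2_m1 : Cnorm2 (Copp C1) = 1.
Proof. unfold Cnorm2, Copp, C1; simpl; ring. Qed.

Lemma vnorm_sub : forall x y r s, vnorm_le x r -> vnorm_le y s -> vnorm_le (vsub x y) (r + s).
Proof. intros. rewrite vsub_eq. apply vnorm_add; auto. replace s with (1 * s) by ring.
  apply vnorm_scale; auto. lra. rewrite Cnorm2_m1; lra. Qed.

Lemma vnorm_0_eq : forall x, vnorm_le x 0 -> forall k, x k = C0.
Proof. intros x [_ H] k. apply Cnorm2_0.
  assert (forall n, sum_f_R0 (sq x) n <= 0) by (intro; specialize (H n); rewrite Rmult_0_l in H; exact H).
  pose proof (H0 k). destruct k. 
  - change (sq x 0%nat <= 0) in H1. pose proof (sq_ge0 x 0%nat). unfold sq in *. lra.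
  - change (sum_f_R0 (sq x) k + sq x (S k) <= 0) in H1. pose proof (ps_ge0 x k). pose proof (sq_ge0 x (S k)). unfold sq in *. lra. Qed.

Lemma eb_norm : forall j, vnorm_le (eb j) 1.
Proof. intro j. split. lra. intro n.
  assert (forall n, sum_f_R0 (fun i => Cnorm2 (eb j i)) n = if Nat.leb j n then 1 else 0).
  { induction n0; simpl. unfold eb. destruct j; simpl; unfold Cnorm2, C1, C0; simpl; ring.
    rewrite IHn0. unfold eb. destruct (Nat.eqb (S n0) j) eqn:E.
    - apply Nat.eqb_eq in E. subst. rewrite Nat.leb_refl. 
      assert (Nat.leb (S n0) n0 = false) by (apply Nat.leb_gt; lia). rewrite H. unfold Cnorm2, C1; simpl; ring.
    - apply Nat.eqb_neq in E. unfold Cnorm2, C0; simpl.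
      destruct (Nat.leb j n0) eqn:E1; destruct (Nat.leb j (S n0)) eqn:E2; try ring.
      apply Nat.leb_le in E1; apply Nat.leb_gt in E2; lia.
      apply Nat.leb_gt in E1; apply Nat.leb_le in E2; lia. }
  rewrite H. destruct (Nat.leb j n); lra. Qed.

Lemma l2_eb : forall j, l2 (eb j).
Proof. intro. exists 1. apply eb_norm. Qed.

Definition ipim (x y : vec) : nat -> R := fun k => snd (x k) * fst (y k) - fst (x k) * snd (y k).
Definition ip (x y : vec) : C := (Series (cross x y), Series (ipim x y)).
Definition Cconj (a : C) : C := (fst a, - snd a).

Lemma exs_sqsum : forall x y, l2 x -> l2 y -> ex_series (fun k => sq x k + sq y k).
Proof. intros. apply exs_plus; apply l2_exs; auto. Qed.

Lemma abs_bound2 : forall a b c d, Rabs (a*c+b*d) <= a*a+b*b+(c*c+d*d) /\ Rabs (b*c - a*d) <= a*a+b*b+(c*c+d*d).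
Proof. intros. pose proof (Rle_0_sqr (a-c)). pose proof (Rle_0_sqr (a+c)). pose proof (Rle_0_sqr (b-d)).
  pose proof (Rle_0_sqr (b+d)). pose proof (Rle_0_sqr (b-c)). pose proof (Rle_0_sqr (b+c)).
  pose proof (Rle_0_sqr (a-d)). pose proof (Rle_0_sqr (a+d)). unfold Rsqr in *.
  split; apply Rabs_le; split; nra. Qed.

Lemma exs_cross : forall x y, l2 x -> l2 y -> ex_series (cross x y).
Proof. intros. apply (exs_abs _ (fun k => sq x k + sq y k)). 2: apply exs_sqsum; auto.
  intro k. unfold cross, sq, Cnorm2. destruct (x k) as [a b]; destruct (y k) as [c d]; simpl.
  apply abs_bound2. Qed.

Lemma exs_ipim : forall x y, l2 x -> l2 y -> ex_series (ipim x y).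
Proof. intros. apply (exs_abs _ (fun k => sq x k + sq y k)). 2: apply exs_sqsum; auto.
  intro k. unfold ipim, sq, Cnorm2. destruct (x k) as [a b]; destruct (y k) as [c d]; simpl.
  apply abs_bound2. Qed.

Lemma Ser_lin2 : forall (u v : nat -> R) p q, ex_series u -> ex_series v ->
  Series (fun k => p * u k + q * v k) = p * Series u + q * Series v.
Proof. intros. rewrite Ser_plus. rewrite !Ser_scal; auto. apply exs_scal; auto. apply exs_scal; auto. Qed.

Lemma ip_add_l : forall x y z, l2 x -> l2 y -> l2 z -> ip (vadd x y) z = Cadd (ip x z) (ip y z).
Proof. intros. unfold ip, Cadd; simpl. apply Cext; simpl.
  - rewrite <- Ser_plus by (apply exs_cross; auto). apply Ser_ext; intro k. unfold cross, vadd, Cadd; simpl; ring.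
  - rewrite <- Ser_plus by (apply exs_ipim; auto). apply Ser_ext; intro k. unfold ipim, vadd, Cadd; simpl; ring. Qed.

Lemma ip_scale_l : forall a x z, l2 x -> l2 z -> ip (vscale a x) z = Cmul a (ip x z).
Proof. intros. unfold ip, Cmul; apply Cext; simpl.
  - replace (fst a * Series (cross x z) - snd a * Series (ipim x z)) with
      (fst a * Series (cross x z) + (- snd a) * Series (ipim x z)) by ring.
    rewrite <- Ser_lin2 by (try apply exs_cross; try apply exs_ipim; auto).
    apply Ser_ext; intro k. unfold cross, ipim, vscale, Cmul; simpl; ring.
  - rewrite <- Ser_lin2 by (try apply exs_cross; try apply exs_ipim; auto).
    apply Ser_ext; intro k. unfold cross, ipim, vscale, Cmul; simpl; ring. Qed.

Lemma Ser_opp' : forall u : nat -> R, Series (fun k => - u k) = - Series u.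
Proof. intros. apply Series_opp. Qed.

Lemma ip_conj : forall x y, ip y x = Cconj (ip x y).
Proof. intros. unfold ip, Cconj. apply Cext; simpl.
  - apply Ser_ext; intro k; unfold cross; ring.
  - rewrite <- Ser_opp'. apply Ser_ext; intro k; unfold ipim; ring. Qed.

Lemma Ser_zero : Series (fun _ => 0) = 0.
Proof. apply SerU. eapply Un_cv_ext. 2: apply cv_const. intro n. simpl. symmetry. induction n; simpl; auto. rewrite IHn. ring. Qed.

Lemma ip_self : forall x, ip x x = (nrm2 x, 0).
Proof. intros. unfold ip, nrm2. apply Cext; simpl.
  - apply Ser_ext; intro k; unfold cross, sq, Cnorm2; ring.
  - rewrite <- Ser_zero. apply Ser_ext; intro k; unfold ipim; ring. Qed.

Lemma Ser_fin : forall (a : nat -> R) N, (forall m, (N < m)%nat -> a m = 0) -> Series a = sum_f_R0 a N.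
Proof. intros. apply SerU. intros e He. exists N. intros n Hn. unfold R_dist.
  replace (sum_f_R0 a n) with (sum_f_R0 a N). rewrite Rminus_diag, Rabs_R0; auto.
  induction Hn. auto. simpl. rewrite H by lia. rewrite <- IHHn. ring. Qed.

Lemma sum_single : forall (g : nat -> R) k, (forall m, m <> k -> g m = 0) -> sum_f_R0 g k = g k.
Proof. intros. destruct k. reflexivity. simpl. rewrite (sum_eq_R0 g k). ring.
  intros. apply H. lia. Qed.

Lemma Ser_single : forall (g : nat -> R) k, (forall m, m <> k -> g m = 0) -> Series g = g k.
Proof. intros. rewrite (Ser_fin g k). apply sum_single; auto. intros; apply H; lia. Qed.

Lemma ip_eb_r : forall x k, ip x (eb k) = x k.
Proof. intros. unfold ip. apply Cext; simpl.
  - rewrite (Ser_single _ k). unfold cross, eb. rewrite Nat.eqb_refl. unfold C1; simpl; ring.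
    intros m Hm. unfold cross, eb. apply Nat.eqb_neq in Hm. rewrite Hm. unfold C0; simpl; ring.
  - rewrite (Ser_single _ k). unfold ipim, eb. rewrite Nat.eqb_refl. unfold C1; simpl; ring.
    intros m Hm. unfold ipim, eb. apply Nat.eqb_neq in Hm. rewrite Hm. unfold C0; simpl; ring. Qed.

Lemma ip_eb_l : forall x k, ip (eb k) x = Cconj (x k).
Proof. intros. rewrite ip_conj, ip_eb_r. auto. Qed.

Lemma ip_add_r : forall x y z, l2 x -> l2 y -> l2 z -> ip z (vadd x y) = Cadd (ip z x) (ip z y).
Proof. intros. rewrite !(ip_conj _ z). rewrite ip_add_l; auto. unfold Cconj, Cadd; apply Cext; simpl; ring. Qed.

Lemma ip_scale_r : forall a x z, l2 x -> l2 z -> ip z (vscale a x) = Cmul (Cconj a) (ip z x).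
Proof. intros. rewrite !(ip_conj _ z). rewrite ip_scale_l; auto. unfold Cconj, Cmul; apply Cext; simpl; ring. Qed.

Lemma ip_ext_l : forall x x' y, (forall k, x k = x' k) -> ip x y = ip x' y.
Proof. intros. replace x' with x; auto. apply functional_extensionality; auto. Qed.

Lemma ip_ext_r : forall x y y', (forall k, y k = y' k) -> ip x y = ip x y'.
Proof. intros. replace y' with y; auto. apply functional_extensionality; auto. Qed.

Fixpoint csum (n : nat) (a : nat -> C) : C :=
  match n with O => C0 | S n => Cadd (csum n a) (a n) end.
Definition vsumn (n : nat) (h : nat -> vec) : vec := fun k => csum n (fun i => h i k).

Lemma csum_ext : forall n a b, (forall i, (i < n)%nat -> a i = b i) -> csum n a = csum n b.
Proof. induction n; simpl; intros; auto. rewrite IHn with (b := b), H; auto. Qed.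

Lemma csum_add : forall n a b, csum n (fun i => Cadd (a i) (b i)) = Cadd (csum n a) (csum n b).
Proof. induction n; simpl; intros. unfold Cadd, C0; apply Cext; simpl; ring.
  rewrite IHn. unfold Cadd; apply Cext; simpl; ring. Qed.

Lemma csum_mul : forall n c a, csum n (fun i => Cmul c (a i)) = Cmul c (csum n a).
Proof. induction n; simpl; intros. unfold Cmul, C0; apply Cext; simpl; ring.
  rewrite IHn. unfold Cadd, Cmul; apply Cext; simpl; ring. Qed.

Lemma csum_conj : forall n a, csum n (fun i => Cconj (a i)) = Cconj (csum n a).
Proof. induction n; simpl; intros. unfold Cconj, C0; apply Cext; simpl; ring.
  rewrite IHn. unfold Cadd, Cconj; apply Cext; simpl; ring. Qed.

Lemma csum_zero : forall n a, (forall i, (i < n)%nat -> a i = C0) -> csum n a = C0.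
Proof. induction n; simpl; intros; auto. rewrite IHn, H; auto. unfold Cadd, C0; apply Cext; simpl; ring. Qed.

Lemma csum_single : forall n a j, (j < n)%nat -> (forall i, (i < n)%nat -> i <> j -> a i = C0) -> csum n a = a j.
Proof. induction n; simpl; intros. lia.
  destruct (Nat.eq_dec j n). subst. rewrite csum_zero. unfold Cadd, C0; apply Cext; simpl; ring.
  intros; apply H0; lia.
  rewrite (IHn a j), (H0 n); try lia. unfold Cadd, C0; apply Cext; simpl; ring. intros; apply H0; lia. Qed.

Lemma csum_ext_extra : forall n m a, (n <= m)%nat -> (forall i, (n <= i < m)%nat -> a i = C0) -> csum m a = csum n a.
Proof. intros n m a H. induction H; intros H0. auto. simpl. rewrite (H0 m) by lia. rewrite IHle. unfold Cadd, C0; apply Cext; simpl; ring.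
  intros; apply H0; lia. Qed.

Lemma fst_csum : forall n a, fst (csum n a) = match n with O => 0 | S n' => sum_f_R0 (fun i => fst (a i)) n' end.
Proof. induction n; simpl; intros; auto. rewrite IHn. destruct n; simpl; auto. unfold C0; simpl; ring. Qed.

Lemma vsumn_S : forall n h, vsumn (S n) h = vadd (vsumn n h) (h n).
Proof. intros. reflexivity. Qed.

Lemma l2_vsumn : forall n h, (forall i, (i < n)%nat -> l2 (h i)) -> l2 (vsumn n h).
Proof. induction n; intros. 
  - replace (vsumn 0 h) with vzero by reflexivity. apply l2_zero.
  - rewrite vsumn_S. apply l2_add; auto. Qed.

Lemma ip_vsumn_l : forall n h z, (forall i, (i < n)%nat -> l2 (h i)) -> l2 z ->
  ip (vsumn n h) z = csum n (fun i => ip (h i) z).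
Proof. induction n; intros.
  - simpl. replace (vsumn 0 h) with (vscale C0 vzero).
    rewrite ip_scale_l; auto using l2_zero. unfold Cmul, C0; apply Cext; simpl; ring.
    apply functional_extensionality; intro; unfold vscale, vzero, vsumn, Cmul, C0; simpl; apply Cext; simpl; ring.
  - rewrite vsumn_S, ip_add_l; auto. simpl. rewrite IHn; auto. apply l2_vsumn; auto. Qed.

Lemma ip_vsumn_r : forall n h z, (forall i, (i < n)%nat -> l2 (h i)) -> l2 z ->
  ip z (vsumn n h) = csum n (fun i => ip z (h i)).
Proof. intros. rewrite ip_conj, ip_vsumn_l; auto. rewrite <- csum_conj. apply csum_ext; intros.
  rewrite (ip_conj z). unfold Cconj; apply Cext; simpl; ring. Qed.

Definition ON (r : nat) (f : nat -> vec) : Prop :=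
  (forall i, (i < r)%nat -> l2 (f i)) /\
  (forall i j, (i < r)%nat -> (j < r)%nat -> ip (f i) (f j) = if Nat.eqb i j then C1 else C0).
Definition comb (r : nat) (a : nat -> C) (f : nat -> vec) : vec := vsumn r (fun i => vscale (a i) (f i)).
Definition proj (r : nat) (f : nat -> vec) (w : vec) : vec := comb r (fun i => ip w (f i)) f.

Fixpoint rs (n : nat) (a : nat -> R) : R := match n with O => 0 | S n => rs n a + a n end.

Lemma rs_ge0 : forall n a, (forall i, (i < n)%nat -> 0 <= a i) -> 0 <= rs n a.
Proof. induction n; simpl; intros. lra. pose proof (H n). pose proof (IHn a). assert (0 <= a n) by (apply H; lia).
  assert (0 <= rs n a) by (apply IHn; intros; apply H; lia). lra. Qed.

Lemma csum_real : forall n b, csum n (fun i => (b i, 0)) = (rs n b, 0).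
Proof. induction n; simpl; intros. reflexivity. rewrite IHn. unfold Cadd; apply Cext; simpl; ring. Qed.

Lemma l2_comb : forall r a f, (forall i, (i < r)%nat -> l2 (f i)) -> l2 (comb r a f).
Proof. intros. apply l2_vsumn. intros; apply l2_scale; auto. Qed.

Lemma ip_comb_l : forall Rr r a f j, ON Rr f -> (r <= Rr)%nat -> (j < Rr)%nat ->
  ip (comb r a f) (f j) = if Nat.ltb j r then a j else C0.
Proof. intros Rr r a f j [Hl Ho] HrR HjR. unfold comb. rewrite ip_vsumn_l.
  2: intros; apply l2_scale; apply Hl; lia. 2: auto.
  destruct (Nat.ltb j r) eqn:E.
  - apply Nat.ltb_lt in E. rewrite (csum_single _ _ j); auto.
    rewrite ip_scale_l, Ho, Nat.eqb_refl by (first [apply Hl; lia | lia]). unfold Cmul, C1; apply Cext; simpl; ring.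
    intros. rewrite ip_scale_l, Ho by (first [apply Hl; lia | lia]). apply Nat.eqb_neq in H0. rewrite H0. unfold Cmul, C0; apply Cext; simpl; ring.
  - apply Nat.ltb_ge in E. apply csum_zero. intros. rewrite ip_scale_l, Ho by (first [apply Hl; lia | lia]).
    assert (Nat.eqb i j = false) by (apply Nat.eqb_neq; lia). rewrite H0. unfold Cmul, C0; apply Cext; simpl; ring. Qed.

Lemma ip_comb_r : forall r a f x, (forall i, (i < r)%nat -> l2 (f i)) -> l2 x ->
  ip x (comb r a f) = csum r (fun i => Cmul (Cconj (a i)) (ip x (f i))).
Proof. intros. unfold comb. rewrite ip_vsumn_r; auto. apply csum_ext; intros. apply ip_scale_r; auto.
  intros; apply l2_scale; auto. Qed.

Lemma conj_mul_self : forall a, Cmul (Cconj a) a = (Cnorm2 a, 0).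
Proof. intros. unfold Cmul, Cconj, Cnorm2; apply Cext; simpl; ring. Qed.

Lemma nrm2_comb : forall Rr r a f, ON Rr f -> (r <= Rr)%nat ->
  nrm2 (comb r a f) = rs r (fun i => Cnorm2 (a i)).
Proof. intros. pose proof (ip_self (comb r a f)).
  rewrite ip_comb_r in H1. 2: intros; apply (proj1 H); lia. 2: apply l2_comb; intros; apply (proj1 H); lia.
  rewrite (csum_ext _ _ (fun i => (Cnorm2 (a i), 0))) in H1. rewrite csum_real in H1.
  inversion H1; auto.
  intros. rewrite (ip_comb_l Rr) by (auto; lia). assert (Nat.ltb i r = true) by (apply Nat.ltb_lt; auto).
  rewrite H3. apply conj_mul_self. Qed.

Lemma ip_sub_l : forall x y z, l2 x -> l2 y -> l2 z -> ip (vsub x y) z = Cadd (ip x z) (Copp (ip y z)).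
Proof. intros. rewrite vsub_eq, ip_add_l, ip_scale_l; auto. unfold Cadd, Copp, Cmul, C1; apply Cext; simpl; ring.
  apply l2_scale; auto. Qed.

Lemma ip_sub_r : forall x y z, l2 x -> l2 y -> l2 z -> ip z (vsub x y) = Cadd (ip z x) (Copp (ip z y)).
Proof. intros. rewrite (ip_conj _ z), ip_sub_l, (ip_conj z), (ip_conj z); auto. unfold Cadd, Copp, Cconj; apply Cext; simpl; ring. Qed.

Lemma l2_proj : forall r f w, (forall i, (i < r)%nat -> l2 (f i)) -> l2 (proj r f w).
Proof. intros. apply l2_comb; auto. Qed.

Lemma bessel : forall Rr r f y, ON Rr f -> (r <= Rr)%nat -> l2 y ->
  rs r (fun i => Cnorm2 (ip y (f i))) <= nrm2 y.
Proof. intros Rr r f y HON HrR Hy.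
  assert (Hf : forall i, (i < r)%nat -> l2 (f i)) by (intros; apply (proj1 HON); lia).
  set (p := proj r f y).
  assert (Hp : l2 p) by (apply l2_proj; auto).
  set (S := rs r (fun i => Cnorm2 (ip y (f i)))).
  assert (E1 : ip p y = (S, 0)).
  { unfold S, p, proj. rewrite ip_conj, ip_comb_r; auto. rewrite (csum_ext _ _ (fun i => (Cnorm2 (ip y (f i)), 0))).
    rewrite csum_real. unfold Cconj; apply Cext; simpl; ring.
    intros. rewrite (ip_conj (f i) y). unfold Cmul, Cconj, Cnorm2; apply Cext; simpl; ring. }
  assert (E2 : ip y p = (S, 0)). { rewrite ip_conj, E1. unfold Cconj; apply Cext; simpl; ring. }
  assert (E3 : ip p p = (S, 0)).
  { unfold S. unfold p at 2, proj. rewrite ip_comb_r; auto. rewrite (csum_ext _ _ (fun i => (Cnorm2 (ip y (f i)), 0))).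
    apply csum_real. intros. unfold p, proj. rewrite (ip_comb_l Rr) by (auto; lia).
    assert (Nat.ltb i r = true) by (apply Nat.ltb_lt; auto). rewrite H0. apply conj_mul_self. }
  pose proof (ip_self (vsub y p)).
  rewrite ip_sub_l, !ip_sub_r, E1, E2, E3, ip_self in H by (auto using l2_sub).
  unfold Cadd, Copp in H. inversion H.
  pose proof (nrm2_ge0 (vsub y p) (l2_sub _ _ Hy Hp)). lra. Qed.

Definition span (t : nat) (g : nat -> vec) (w : vec) : Prop :=
  exists b : nat -> C, forall k, w k = comb t b g k.

Lemma comb_pt : forall t b g k, comb t b g k = csum t (fun s => Cmul (b s) (g s k)).
Proof. reflexivity. Qed.

Lemma span_ext : forall t g w w', (forall k, w k = w' k) -> span t g w -> span t g w'.
Proof. intros t g w w' H [b Hb]. exists b. intro k. rewrite <- H. auto. Qed.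

Lemma span_add : forall t g x y, span t g x -> span t g y -> span t g (vadd x y).
Proof. intros t g x y [b1 H1] [b2 H2]. exists (fun s => Cadd (b1 s) (b2 s)). intro k.
  unfold vadd. rewrite H1, H2, !comb_pt, <- csum_add. apply csum_ext; intros.
  unfold Cadd, Cmul; apply Cext; simpl; ring. Qed.

Lemma span_scale : forall t g a x, span t g x -> span t g (vscale a x).
Proof. intros t g a x [b H]. exists (fun s => Cmul a (b s)). intro k.
  unfold vscale. rewrite H, !comb_pt, <- csum_mul. apply csum_ext; intros.
  unfold Cmul; apply Cext; simpl; ring. Qed.

Lemma span_sub : forall t g x y, span t g x -> span t g y -> span t g (vsub x y).
Proof. intros. rewrite vsub_eq. apply span_add; auto. apply span_scale; auto. Qed.

Lemma span_zero : forall t g, span t g vzero.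
Proof. intros. exists (fun _ => C0). intro k. rewrite comb_pt. rewrite csum_zero. reflexivity.
  intros. unfold Cmul, C0; apply Cext; simpl; ring. Qed.

Lemma span_gen : forall t g s, (s < t)%nat -> span t g (g s).
Proof. intros. exists (fun i => if Nat.eqb i s then C1 else C0). intro k. rewrite comb_pt.
  rewrite (csum_single _ _ s); auto. rewrite Nat.eqb_refl. unfold Cmul, C1; apply Cext; simpl; ring.
  intros. apply Nat.eqb_neq in H1. rewrite H1. unfold Cmul, C0; apply Cext; simpl; ring. Qed.

Lemma span_mono : forall t t' g w, (t <= t')%nat -> span t g w -> span t' g w.
Proof. intros t t' g w Ht [b H]. exists (fun s => if Nat.ltb s t then b s else C0). intro k.
  rewrite H, !comb_pt. rewrite (csum_ext_extra t t'); auto.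
  apply csum_ext; intros. apply Nat.ltb_lt in H0. rewrite H0. auto.
  intros. assert (Nat.ltb i t = false) by (apply Nat.ltb_ge; lia). rewrite H1. unfold Cmul, C0; apply Cext; simpl; ring. Qed.

Lemma span_comb : forall t g r a h, (forall i, (i < r)%nat -> span t g (h i)) -> span t g (comb r a h).
Proof. induction r; intros.
  - apply (span_ext _ _ vzero). intro; reflexivity. apply span_zero.
  - apply (span_ext _ _ (vadd (comb r a h) (vscale (a r) (h r)))). intro; reflexivity.
    apply span_add. apply IHr; auto. apply span_scale; auto. Qed.

(* ---- Gram-Schmidt ---- *)
Definition res (r : nat) (f : nat -> vec) (g : vec) : vec := vsub g (proj r f g).
Definition normz (x : vec) : vec := vscale (/ sqrt (nrm2 x), 0) x.
Definition upd (f : nat -> vec) (r : nat) (h : vec) : nat -> vec := fun i => if Nat.eqb i r then h else f i.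
Definition gs_step (st : nat * (nat -> vec)) (g : vec) : nat * (nat -> vec) :=
  if Req_EM_T (nrm2 (res (fst st) (snd st) g)) 0 then st
  else (S (fst st), upd (snd st) (fst st) (normz (res (fst st) (snd st) g))).
Fixpoint gs (g : nat -> vec) (t : nat) : nat * (nat -> vec) :=
  match t with O => (O, fun _ => vzero) | S t => gs_step (gs g t) (g t) end.

Lemma comb_ext_f : forall r a f f', (forall i, (i < r)%nat -> f i = f' i) -> forall k, comb r a f k = comb r a f' k.
Proof. intros. rewrite !comb_pt. apply csum_ext; intros. rewrite H; auto. Qed.

Lemma proj_ext_f : forall r f f' w, (forall i, (i < r)%nat -> f i = f' i) -> forall k, proj r f w k = proj r f' w k.
Proof. intros. unfold proj. rewrite !comb_pt. apply csum_ext; intros. rewrite H; auto. Qed.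

Lemma ip_res_f : forall Rr r f g j, ON Rr f -> (r <= Rr)%nat -> (j < r)%nat -> l2 g ->
  ip (res r f g) (f j) = C0.
Proof. intros. unfold res. assert (Hf : forall i, (i < r)%nat -> l2 (f i)) by (intros; apply (proj1 H); lia).
  assert (l2 (f j)) by (apply (proj1 H); lia).
  rewrite ip_sub_l; auto. 2: apply l2_proj; auto. unfold proj. rewrite (ip_comb_l Rr) by (auto; lia).
  apply Nat.ltb_lt in H1. rewrite H1. unfold Cadd, Copp, C0; apply Cext; simpl; ring. Qed.

Lemma l2_res : forall r f g, (forall i, (i < r)%nat -> l2 (f i)) -> l2 g -> l2 (res r f g).
Proof. intros. apply l2_sub; auto. apply l2_proj; auto. Qed.

Lemma nrm2_zero_pt : forall x, l2 x -> nrm2 x = 0 -> forall k, x k = C0.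
Proof. intros. apply vnorm_0_eq. apply vnorm_le_iff; auto. split; lra. Qed.

Section GS.
Variable g : nat -> vec.
Hypothesis Hg : forall s, l2 (g s).

Lemma gs_inv : forall t,
  (fst (gs g t) <= t)%nat /\ ON (fst (gs g t)) (snd (gs g t)) /\
  (forall s, (s < t)%nat -> forall k, g s k = proj (fst (gs g t)) (snd (gs g t)) (g s) k) /\
  (forall i, (i < fst (gs g t))%nat -> span t g (snd (gs g t) i)).
Proof.
  induction t.
  - simpl. split. lia. split. split; intros; lia. split; intros; lia.
  - destruct IHt as [Hle [HON [Hproj Hspan]]].
    simpl. unfold gs_step.
    set (r := fst (gs g t)) in *. set (f := snd (gs g t)) in *.
    assert (Hf : forall i, (i < r)%nat -> l2 (f i)) by (intros; apply (proj1 HON); lia).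
    set (rv := res r f (g t)).
    assert (Hrv : l2 rv) by (apply l2_res; auto).
    destruct (Req_EM_T (nrm2 rv) 0) as [E|E].
    + simpl. fold r f. split. lia. split. auto. split.
      * intros s Hs k. destruct (Nat.eq_dec s t).
        -- subst s. pose proof (nrm2_zero_pt _ Hrv E k). unfold rv, res, vsub in H.
           destruct (g t k) as [a b]; destruct (proj r f (g t) k) as [c d].
           unfold Cadd, Copp, C0 in H. injection H as H1 H2. apply Cext; simpl; lra.
        -- apply Hproj. lia.
      * intros. apply (span_mono t). lia. auto.
    + simpl. set (f' := upd f r (normz rv)).
      assert (Hpos : 0 < nrm2 rv) by (pose proof (nrm2_ge0 rv Hrv); lra).
      set (c := / sqrt (nrm2 rv)).
      assert (Hsq : 0 < sqrt (nrm2 rv)) by (apply sqrt_lt_R0; auto).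
      assert (Hc : c * c * nrm2 rv = 1).
      { unfold c. rewrite <- (sqrt_sqrt (nrm2 rv)) at 3 by lra. field. lra. }
      assert (Hf'old : forall i, (i < r)%nat -> f' i = f i).
      { intros. unfold f', upd. assert (Nat.eqb i r = false) by (apply Nat.eqb_neq; lia). rewrite H0; auto. }
      assert (Hf'r : f' r = normz rv) by (unfold f', upd; rewrite Nat.eqb_refl; auto).
      assert (Hl2n : l2 (normz rv)) by (apply l2_scale; auto).
      assert (Hip1 : forall j, (j < r)%nat -> ip (normz rv) (f j) = C0).
      { intros. unfold normz. rewrite ip_scale_l; auto. unfold rv; rewrite (ip_res_f r r f (g t) j HON (le_n r) H (Hg t)). unfold Cmul, C0; apply Cext; simpl; ring. }
      assert (Hnn : ip (normz rv) (normz rv) = C1).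
      { unfold normz. rewrite ip_scale_l, ip_scale_r, ip_self; auto; try apply l2_scale; auto. fold c. unfold Cmul, Cconj, C1; apply Cext; simpl.
        rewrite <- Hc. ring. ring. }
      assert (HON' : ON (S r) f').
      { split.
        - intros. destruct (Nat.eq_dec i r). subst; rewrite Hf'r; auto. rewrite Hf'old by lia. apply Hf; lia.
        - intros i j Hi Hj. destruct (Nat.eq_dec i r); destruct (Nat.eq_dec j r).
          + subst. rewrite Hf'r, Nat.eqb_refl. auto.
          + subst. rewrite Hf'r, Hf'old by lia. rewrite Hip1 by lia.
            assert (Nat.eqb r j = false) by (apply Nat.eqb_neq; lia). rewrite H; auto.
          + subst. rewrite Hf'r, Hf'old by lia. rewrite ip_conj, Hip1 by lia.
            assert (Nat.eqb i r = false) by (apply Nat.eqb_neq; lia). rewrite H; unfold Cconj, C0; apply Cext; simpl; ring.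
          + rewrite !Hf'old by lia. apply (proj2 HON); lia. }
      assert (Hprojs : forall w k, proj (S r) f' w k = Cadd (proj r f w k) (Cmul (ip w (normz rv)) (normz rv k))).
      { intros. unfold proj. change (comb (S r) (fun i => ip w (f' i)) f' k) with
          (Cadd (comb r (fun i => ip w (f' i)) f' k) (Cmul (ip w (f' r)) (f' r k))).
        rewrite Hf'r. f_equal. rewrite !comb_pt. apply csum_ext; intros. rewrite Hf'old; auto. }
      split. lia. split. auto. split.
      * intros s Hs k. rewrite Hprojs. destruct (Nat.eq_dec s t).
        -- subst s.
           assert (Hgt : forall k, g t k = vadd (proj r f (g t)) rv k).
           { intro. unfold vadd, rv, res, vsub. unfold Cadd, Copp; apply Cext; simpl; ring. }
           assert (ip (g t) (normz rv) = (sqrt (nrm2 rv), 0)).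
           { rewrite (ip_ext_l _ _ _ Hgt). rewrite ip_add_l; auto. 2: apply l2_proj; auto.
             assert (ip (proj r f (g t)) (normz rv) = C0).
             { rewrite <- Hf'r. unfold proj.
               rewrite (ip_ext_l _ (comb r (fun i => ip (g t) (f i)) f')) by (apply comb_ext_f; intros; rewrite Hf'old; auto).
               rewrite (ip_comb_l (S r)) by (auto; lia). rewrite Nat.ltb_irrefl; auto. }
             rewrite H. unfold normz. rewrite ip_scale_r, ip_self; auto. fold c.
             unfold Cadd, Cmul, Cconj, C0; apply Cext; simpl. 
             assert (Hcn : c * nrm2 rv = sqrt (nrm2 rv)).
             { unfold c. pose proof (sqrt_sqrt (nrm2 rv) ltac:(lra)). rewrite <- H0 at 2. field. lra. }
             rewrite <- Hcn. ring. ring. }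
           rewrite H. unfold normz, vscale. fold c. rewrite (Hgt k). unfold vadd.
           assert (Hsc : sqrt (nrm2 rv) * c = 1) by (unfold c; field; lra).
           f_equal. replace (Cmul (sqrt (nrm2 rv), 0) (Cmul (c, 0) (rv k))) with (Cmul (sqrt (nrm2 rv) * c, 0) (rv k))
             by (unfold Cmul; apply Cext; simpl; ring).
           rewrite Hsc. unfold Cmul; apply Cext; simpl; ring.
        -- assert (ip (g s) (normz rv) = C0).
           { rewrite (ip_ext_l _ _ _ (Hproj s ltac:(lia))). unfold proj. rewrite <- Hf'r.
             rewrite (ip_ext_l _ (comb r (fun i => ip (g s) (f i)) f')).
             rewrite (ip_comb_l (S r)); auto. rewrite Nat.ltb_irrefl; auto. 
             apply comb_ext_f. intros; rewrite Hf'old; auto. }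
           rewrite H, <- (Hproj s) by lia. unfold Cadd, Cmul, C0; apply Cext; simpl; ring.
      * intros i Hi. destruct (Nat.eq_dec i r).
        -- subst. rewrite Hf'r. unfold normz. apply span_scale. unfold rv, res. apply span_sub.
           apply span_gen; lia. unfold proj. apply span_comb. intros. apply (span_mono t). lia. apply Hspan; auto.
        -- rewrite Hf'old by lia. apply (span_mono t). lia. apply Hspan; lia.
Qed.

Lemma gs_step_mono : forall t, (fst (gs g t) <= fst (gs g (S t)))%nat /\
  forall i, (i < fst (gs g t))%nat -> snd (gs g (S t)) i = snd (gs g t) i.
Proof. intros. simpl. unfold gs_step. destruct (Req_EM_T _ _). split; auto.
  simpl. split. lia. intros. unfold upd. assert (Nat.eqb i (fst (gs g t)) = false) by (apply Nat.eqb_neq; lia).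
  rewrite H0; auto. Qed.

Lemma gs_mono : forall t t', (t <= t')%nat -> (fst (gs g t) <= fst (gs g t'))%nat /\
  forall i, (i < fst (gs g t))%nat -> snd (gs g t') i = snd (gs g t) i.
Proof. intros. induction H. split; auto. destruct IHle. destruct (gs_step_mono m).
  split. lia. intros. rewrite H3 by lia. auto. Qed.

End GS.

Lemma nrm2_ext : forall x y, (forall k, x k = y k) -> nrm2 x = nrm2 y.
Proof. intros. replace y with x; auto. apply functional_extensionality; auto. Qed.

Lemma rs_swap : forall r K (a : nat -> nat -> R),
  rs r (fun i => sum_f_R0 (fun k => a i k) K) = sum_f_R0 (fun k => rs r (fun i => a i k)) K.
Proof. induction r; intros; simpl.
  - rewrite sum_eq_R0; auto.
  - rewrite IHr. rewrite <- sum_plus. auto. Qed.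

Lemma rs_le : forall r a b, (forall i, (i < r)%nat -> a i <= b i) -> rs r a <= rs r b.
Proof. induction r; simpl; intros. lra. assert (a r <= b r) by (apply H; lia).
  assert (rs r a <= rs r b) by (apply IHr; intros; apply H; lia). lra. Qed.

Lemma rs_const1 : forall r, rs r (fun _ => 1) = INR r.
Proof. induction r; simpl rs. simpl; auto. rewrite IHr, S_INR. auto. Qed.

Lemma sum_const1 : forall K, sum_f_R0 (fun _ => 1) K = INR (S K).
Proof. induction K; simpl sum_f_R0. simpl; auto. rewrite IHK. rewrite (S_INR (S K)). auto. Qed.

Lemma rs_sum : forall n a, rs (S n) a = sum_f_R0 a n.
Proof. induction n; intros; simpl. ring. simpl in IHn. rewrite <- IHn. auto. Qed.

Lemma Cnorm2_conj : forall a, Cnorm2 (Cconj a) = Cnorm2 a.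
Proof. intros. unfold Cnorm2, Cconj; simpl; ring. Qed.

Lemma nrm2_unit : forall r f i, ON r f -> (i < r)%nat -> nrm2 (f i) = 1.
Proof. intros. pose proof (ip_self (f i)). rewrite (proj2 H) in H1 by auto. rewrite Nat.eqb_refl in H1.
  unfold C1 in H1. inversion H1. auto. Qed.

Lemma rs_ext : forall r a b, (forall i, (i < r)%nat -> a i = b i) -> rs r a = rs r b.
Proof. induction r; simpl; intros; auto. rewrite (IHr a b), H; auto. Qed.

Lemma sum_le_ext : forall (a b : nat -> R) K, (forall k, (k <= K)%nat -> a k <= b k) -> sum_f_R0 a K <= sum_f_R0 b K.
Proof. intros. induction K; simpl. apply H; lia. assert (a (S K) <= b (S K)) by (apply H; lia).
  assert (sum_f_R0 a K <= sum_f_R0 b K) by (apply IHK; intros; apply H; lia). lra. Qed.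

Lemma counting : forall r f K, ON r f ->
  (forall k, (k <= K)%nat -> forall m, eb k m = proj r f (eb k) m) -> (S K <= r)%nat.
Proof. intros. apply INR_le. rewrite <- sum_const1, <- rs_const1.
  assert (Hf : forall i, (i < r)%nat -> l2 (f i)) by apply H.
  assert (E : forall k, (k <= K)%nat -> 1 = rs r (fun i => Cnorm2 (f i k))).
  { intros. assert (nrm2 (eb k) = 1). { apply Rle_antisym. 
      destruct (proj1 (vnorm_le_iff _ 1 (l2_eb k)) (eb_norm k)). lra.
      pose proof (ps_le_nrm2 (eb k) (l2_eb k) k). unfold sq in H2.
      rewrite (sum_single _ k) in H2. assert (Cnorm2 (eb k k) = 1) by (unfold eb; rewrite Nat.eqb_refl; unfold Cnorm2, C1; simpl; ring). lra.
      intros. unfold eb. apply Nat.eqb_neq in H3. rewrite H3. unfold Cnorm2, C0; simpl; ring. }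
    rewrite <- H2, (nrm2_ext _ _ (H0 k H1)). unfold proj. rewrite (nrm2_comb r); auto.
    apply rs_ext. intros. rewrite ip_eb_l, Cnorm2_conj. auto. }
  rewrite (sum_eq _ _ K E) by auto. rewrite <- rs_swap. apply rs_le. intros.
  pose proof (ps_le_nrm2 (f i) (Hf i H1) K). rewrite (nrm2_unit r f i H H1) in H2. exact H2. Qed.

Definition trunc (I : nat) (x : vec) : vec := fun i => if Nat.ltb i I then x i else C0.

Lemma l2_trunc : forall I x, l2 x -> l2 (trunc I x).
Proof. intros I x [r [Hr H]]. exists r. split; auto. intro n. eapply Rle_trans. 2: apply (H n).
  apply sum_le_ext. intros. unfold trunc. destruct (Nat.ltb k I). lra. unfold Cnorm2, C0; simpl.
  pose proof (Cnorm2_ge0 (x k)). unfold Cnorm2 in H1. lra. Qed.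

Lemma sq_tail : forall x I k, sq (vsub x (trunc I x)) k = if Nat.ltb k I then 0 else sq x k.
Proof. intros. unfold sq, vsub, trunc. destruct (Nat.ltb k I); unfold Cnorm2, Cadd, Copp, C0; simpl; ring. Qed.

Lemma sum_tail : forall (a : nat -> R) N n,
  sum_f_R0 (fun k => if Nat.ltb k (S N) then 0 else a k) n = sum_f_R0 a n - sum_f_R0 a (Nat.min n N).
Proof. intros. induction n.
  - simpl. replace (Nat.ltb 0 (S N)) with true by (symmetry; apply Nat.ltb_lt; lia). ring.
  - simpl sum_f_R0 at 1 2. rewrite IHn. destruct (Compare_dec.le_lt_dec (S n) N).
    + replace (Nat.min (S n) N) with (S n) by lia. replace (Nat.min n N) with n by lia.
      replace (Nat.ltb (S n) (S N)) with true by (symmetry; apply Nat.ltb_lt; lia). simpl. ring.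
    + replace (Nat.min (S n) N) with N by lia. replace (Nat.min n N) with N by lia.
      replace (Nat.ltb (S n) (S N)) with false by (symmetry; apply Nat.ltb_ge; lia). ring. Qed.

Lemma tail_small : forall x, l2 x -> forall eps, 0 < eps -> exists I, forall I', (I <= I')%nat ->
  nrm2 (vsub x (trunc I' x)) <= eps.
Proof. intros x Hx eps He.
  pose proof (cv_exs _ (l2_exs x Hx)) as Hcv. fold (nrm2 x) in Hcv.
  destruct (Hcv eps He) as [N HN]. exists (S N). intros I' HI.
  destruct I' as [|N']. lia.
  assert (HN' := HN N' ltac:(lia)). unfold R_dist in HN'.
  assert (Hle := ps_le_nrm2 x Hx N'). rewrite Rabs_left1 in HN' by lra.
  apply l2_of_bound. intro n.
  rewrite (sum_eq _ (fun k => if Nat.ltb k (S N') then 0 else sq x k)) by (intros; apply sq_tail).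
  rewrite sum_tail. destruct (Compare_dec.le_lt_dec N' n).
  - replace (Nat.min n N') with N' by lia. pose proof (ps_le_nrm2 x Hx n). lra.
  - replace (Nat.min n N') with n by lia. lra. Qed.

Section Final.
Variable g : nat -> vec.
Hypothesis Hg : forall s, l2 (g s).
Variable tau : nat -> nat.
Hypothesis Htau_mono : forall j k, (j <= k)%nat -> (tau j <= tau k)%nat.
Hypothesis Htau_e : forall k, exists s, (s < tau k)%nat /\ forall m, g s m = eb k m.

Definition rr (t : nat) := fst (gs g t).
Definition ff (t : nat) := snd (gs g t).
Definition F (i : nat) : vec := ff (tau i) i.

Lemma eb_proj : forall k t, (tau k <= t)%nat -> forall m, eb k m = proj (rr t) (ff t) (eb k) m.
Proof. intros. destruct (Htau_e k) as [s [Hs Hse]].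
  destruct (gs_inv g Hg t) as [_ [_ [Hp _]]].
  replace (eb k) with (g s) by (apply functional_extensionality; auto).
  apply Hp. lia. Qed.

Lemma rr_tau : forall k, (S k <= rr (tau k))%nat.
Proof. intros. apply (counting _ (ff (tau k))). apply (gs_inv g Hg).
  intros. apply eb_proj. apply Htau_mono; auto. Qed.

Lemma F_stable : forall t i, (i < rr t)%nat -> F i = ff t i.
Proof. intros. unfold F. set (T := Nat.max t (tau i)).
  destruct (gs_mono g t T ltac:(lia)) as [_ H1].
  destruct (gs_mono g (tau i) T ltac:(lia)) as [_ H2].
  pose proof (rr_tau i). unfold ff, rr in *. transitivity (snd (gs g T) i). symmetry; apply H2; lia. apply H1; lia. Qed.

Lemma ON_F : forall n, ON n F.
Proof. intros. split.
  - intros. pose proof (rr_tau i). rewrite (F_stable (tau i) i) by lia.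
    destruct (gs_inv g Hg (tau i)) as [_ [[Hl _] _]]. apply Hl. unfold rr in *; lia.
  - intros.
    pose proof (rr_tau (Nat.max i j)).
    rewrite (F_stable (tau (Nat.max i j)) i), (F_stable (tau (Nat.max i j)) j) by lia.
    destruct (gs_inv g Hg (tau (Nat.max i j))) as [_ [[_ Ho] _]]. apply Ho; unfold rr in *; lia. Qed.

Lemma F_l2 : forall i, l2 (F i).
Proof. intros. apply (proj1 (ON_F (S i))). lia. Qed.

Lemma ip_F : forall i j, ip (F i) (F j) = if Nat.eqb i j then C1 else C0.
Proof. intros. apply (proj2 (ON_F (S (Nat.max i j)))); lia. Qed.

Lemma F_zero : forall k i, (rr (tau k) <= i)%nat -> F i k = C0.
Proof. intros. rewrite <- ip_eb_r. 
  rewrite (ip_ext_r _ _ _ (eb_proj k (tau k) (le_n _))).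
  unfold proj. rewrite ip_comb_r. 2: intros; destruct (gs_inv g Hg (tau k)) as [_ [[Hl _] _]]; apply Hl; auto. 2: apply F_l2.
  apply csum_zero. intros. rewrite <- (F_stable (tau k) i0 H0).
  rewrite ip_F.
  assert (Nat.eqb i i0 = false) by (apply Nat.eqb_neq; unfold rr in *; lia). rewrite H1.
  unfold Cmul, C0; apply Cext; simpl; ring. Qed.

Lemma F_zero_tau : forall k i, (tau k <= i)%nat -> F i k = C0.
Proof. intros. apply F_zero. assert (rr (tau k) <= tau k)%nat by apply (gs_inv g Hg). lia. Qed.

Lemma F_exp : forall k m, eb k m = comb (tau k) (fun i => ip (eb k) (F i)) F m.
Proof. intros. rewrite (eb_proj k (tau k) (le_n _)). unfold proj.
  assert (rr (tau k) <= tau k)%nat by apply (gs_inv g Hg).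
  rewrite !comb_pt. rewrite (csum_ext_extra (rr (tau k)) (tau k)); auto.
  apply csum_ext. intros. rewrite (F_stable (tau k) i); auto.
  intros. rewrite ip_eb_l, F_zero by lia. unfold Cmul, Cconj, C0; apply Cext; simpl; ring. Qed.

End Final.

Section Unitary.
Variable Fm : nat -> vec.
Variable tau : nat -> nat.
Hypothesis Hmono : forall j k, (j <= k)%nat -> (tau j <= tau k)%nat.
Hypothesis HON : forall n, ON n Fm.
Hypothesis Hz : forall k i, (tau k <= i)%nat -> Fm i k = C0.
Hypothesis Hexp : forall k m, eb k m = comb (tau k) (fun i => ip (eb k) (Fm i)) Fm m.

Definition ufor (x : vec) : vec := fun k => csum (tau k) (fun i => Cmul (x i) (Fm i k)).
Definition uop (x : vec) : vec := if excluded_middle_informative (l2 x) then ufor x else x.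
Definition vop (y : vec) : vec := fun j => ip y (Fm j).

Lemma Fl2 : forall i, l2 (Fm i).
Proof. intros. apply (proj1 (HON (S i))). lia. Qed.

Lemma ipF : forall i j, ip (Fm i) (Fm j) = if Nat.eqb i j then C1 else C0.
Proof. intros. apply (proj2 (HON (S (Nat.max i j)))); lia. Qed.

Lemma ufor_fin : forall x I, (forall i, (I <= i)%nat -> x i = C0) -> forall k, ufor x k = comb I x Fm k.
Proof. intros. unfold ufor. rewrite comb_pt. set (M := Nat.max I (tau k)).
  rewrite <- (csum_ext_extra (tau k) M). rewrite <- (csum_ext_extra I M).
  apply csum_ext; intros; unfold vscale; auto. lia.
  intros. unfold vscale. rewrite H by lia. unfold Cmul, C0; apply Cext; simpl; ring. lia.
  intros. rewrite Hz by lia. unfold Cmul, C0; apply Cext; simpl; ring. Qed.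

Lemma ufor_ext : forall x y, (forall i, x i = y i) -> forall k, ufor x k = ufor y k.
Proof. intros. unfold ufor. apply csum_ext. intros; rewrite H; auto. Qed.

Lemma ufor_lin : forall a x y k, ufor (vadd (vscale a x) y) k = vadd (vscale a (ufor x)) (ufor y) k.
Proof. intros. unfold ufor, vadd, vscale. rewrite <- csum_mul, <- csum_add. apply csum_ext; intros.
  unfold Cmul, Cadd; apply Cext; simpl; ring. Qed.

Lemma ufor_add : forall x y k, ufor (vadd x y) k = Cadd (ufor x k) (ufor y k).
Proof. intros. rewrite (ufor_ext (vadd x y) (vadd (vscale C1 x) y)). rewrite ufor_lin. unfold vadd, vscale.
  f_equal. unfold Cmul, C1; apply Cext; simpl; ring.
  intro. unfold vadd, vscale. f_equal. unfold Cmul, C1; apply Cext; simpl; ring. Qed.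

Lemma l2_ufor_fin : forall x I, (forall i, (I <= i)%nat -> x i = C0) -> l2 (ufor x) /\ nrm2 (ufor x) = rs I (fun i => Cnorm2 (x i)).
Proof. intros. assert (ufor x = comb I x Fm) by (apply functional_extensionality; apply ufor_fin; auto).
  rewrite H0. split. apply l2_comb. intros; apply Fl2. apply (nrm2_comb I); auto. Qed.

Lemma U1 : forall x r, vnorm_le x r -> vnorm_le (ufor x) r.
Proof. intros x r [Hr Hx]. split; auto. intro K. set (I := tau K).
  assert (Ht : forall i, (I <= i)%nat -> trunc I x i = C0).
  { intros. unfold trunc. replace (Nat.ltb i I) with false by (symmetry; apply Nat.ltb_ge; lia). auto. }
  destruct (l2_ufor_fin _ _ Ht) as [Hl Hn].
  change (sum_f_R0 (fun i => Cnorm2 (ufor x i)) K) with (sum_f_R0 (sq (ufor x)) K).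
  rewrite (sum_eq _ (sq (ufor (trunc I x)))).
  2: { intros k Hk. unfold sq. f_equal. unfold ufor. apply csum_ext. intros. unfold trunc.
       assert (tau k <= I)%nat by (apply Hmono; auto). replace (Nat.ltb i I) with true by (symmetry; apply Nat.ltb_lt; lia). auto. }
  eapply Rle_trans. apply ps_le_nrm2; auto. rewrite Hn.
  rewrite (rs_ext _ _ (fun i => Cnorm2 (x i))).
  2: { intros. unfold trunc. replace (Nat.ltb i I) with true by (symmetry; apply Nat.ltb_lt; lia). auto. }
  destruct I. simpl. nra. rewrite rs_sum. apply Hx. Qed.

Lemma V1 : forall y r, vnorm_le y r -> vnorm_le (vop y) r.
Proof. intros y r Hy. pose proof (vnorm_le_l2 _ _ Hy) as Hl. destruct (proj1 (vnorm_le_iff _ _ Hl) Hy) as [Hr Hn].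
  split; auto. intro n. unfold vop. rewrite <- rs_sum. eapply Rle_trans. apply (bessel (S n)); auto. auto. Qed.

Lemma nrm2_le_of : forall x, l2 x -> vnorm_le x (sqrt (nrm2 x)).
Proof. intros. apply vnorm_le_iff; auto. split. apply sqrt_pos. rewrite sqrt_sqrt. lra. apply nrm2_ge0; auto. Qed.

Lemma VU : forall x, l2 x -> forall j, ip (ufor x) (Fm j) = x j.
Proof. intros x Hx j.
  set (z := Cadd (ip (ufor x) (Fm j)) (Copp (x j))).
  assert (forall eps, 0 < eps -> Cnorm2 z <= eps).
  { intros eps He. destruct (tail_small x Hx eps He) as [I0 HI0]. set (I := Nat.max I0 (S j)).
    set (t := trunc I x). set (w := vsub x (trunc I x)).
    assert (Ht : forall i, (I <= i)%nat -> t i = C0).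
    { intros. unfold t, trunc. replace (Nat.ltb i I) with false by (symmetry; apply Nat.ltb_ge; lia). auto. }
    assert (Hw : l2 w) by (apply l2_sub; auto; apply l2_trunc; auto).
    assert (Huw : l2 (ufor w)) by (apply (vnorm_le_l2 _ (sqrt (nrm2 w))); apply U1; apply nrm2_le_of; auto).
    destruct (l2_ufor_fin _ _ Ht) as [Hut _].
    assert (E : forall k, ufor x k = vadd (ufor t) (ufor w) k).
    { intro k. unfold vadd. rewrite <- ufor_add. apply ufor_ext. intro i. unfold vadd, t, w, vsub, trunc.
      destruct (Nat.ltb i I); unfold Cadd, Copp, C0; apply Cext; simpl; ring. }
    assert (E2 : ip (ufor t) (Fm j) = x j).
    { rewrite (ip_ext_l _ _ _ (ufor_fin t I Ht)). rewrite (ip_comb_l (S I)); auto. 2: lia.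
      replace (Nat.ltb j I) with true by (symmetry; apply Nat.ltb_lt; lia). unfold t, trunc.
      replace (Nat.ltb j I) with true by (symmetry; apply Nat.ltb_lt; lia). auto. }
    assert (Ez : z = ip (ufor w) (Fm j)).
    { unfold z. rewrite (ip_ext_l _ _ _ E). rewrite ip_add_l; auto. 2: apply Fl2. rewrite E2.
      unfold Cadd, Copp; apply Cext; simpl; ring. }
    rewrite Ez.
    pose proof (bessel (S j) (S j) Fm (ufor w) (HON (S j)) (le_n _) Huw). simpl in H.
    pose proof (rs_ge0 j (fun i => Cnorm2 (ip (ufor w) (Fm i))) (fun i _ => Cnorm2_ge0 _)).
    assert (nrm2 (ufor w) <= nrm2 w).
    { pose proof (U1 _ _ (nrm2_le_of w Hw)). apply vnorm_le_iff in H1; auto. destruct H1.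
      rewrite sqrt_sqrt in H2; auto. apply nrm2_ge0; auto. }
    specialize (HI0 I ltac:(lia)). fold w in HI0. lra. }
  assert (Cnorm2 z = 0). { apply Rle_antisym. apply Rnot_lt_le. intro. assert (0 < Cnorm2 z / 2) by lra. specialize (H _ H1). lra. apply Cnorm2_ge0. }
  apply Cnorm2_0 in H0. unfold z in H0. destruct (ip (ufor x) (Fm j)) as [a b]; destruct (x j) as [c d].
  unfold Cadd, Copp, C0 in H0. injection H0 as H1 H2. apply Cext; simpl in *; lra. Qed.

Lemma UV : forall y, l2 y -> forall k, ufor (vop y) k = y k.
Proof. intros. rewrite <- (ip_eb_r y k). rewrite (ip_ext_r _ _ _ (Hexp k)).
  rewrite ip_comb_r; auto. 2: intros; apply Fl2. unfold ufor, vop. apply csum_ext. intros.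
  rewrite ip_eb_l. unfold Cconj, Cmul; apply Cext; simpl; ring. Qed.

Lemma l2_vop : forall y, l2 y -> l2 (vop y).
Proof. intros y [r Hr]. exists r. apply V1; auto. Qed.

Lemma l2_ufor : forall x, l2 x -> l2 (ufor x).
Proof. intros x [r Hr]. exists r. apply U1; auto. Qed.

Lemma uop_l2 : forall x, l2 x -> uop x = ufor x.
Proof. intros. unfold uop. destruct (excluded_middle_informative (l2 x)); tauto. Qed.

Lemma unitary_uv : is_unitary uop vop.
Proof. split; [|split; [|split; [|split]]].
  - split.
    + intros. assert (l2 (vadd (vscale a x) y)) by (apply l2_add; auto; apply l2_scale; auto).
      rewrite !uop_l2; auto. apply ufor_lin.
    + exists 1. intros x r Hx. rewrite uop_l2 by (eapply vnorm_le_l2; eauto). rewrite Rmult_1_l. apply U1; auto.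
  - split.
    + intros. unfold vop. rewrite ip_add_l, ip_scale_l; auto; try apply Fl2. apply l2_scale; auto.
    + exists 1. intros x r Hx. rewrite Rmult_1_l. apply V1; auto.
  - intros. rewrite uop_l2; auto. unfold vop. apply VU; auto.
  - intros. rewrite uop_l2. apply UV; auto. apply l2_vop; auto.
  - intros x r. unfold uop. destruct (excluded_middle_informative (l2 x)). 2: tauto. split.
    + apply U1.
    + intro H. apply V1 in H. replace x with (vop (ufor x)). auto. apply functional_extensionality. intro j. apply VU; auto. Qed.

Lemma uop_eb : forall j k, uop (eb j) k = Fm j k.
Proof. intros. rewrite uop_l2 by apply l2_eb. rewrite (ufor_fin _ (S j)). rewrite comb_pt.
  rewrite (csum_single _ _ j). unfold eb. rewrite Nat.eqb_refl. unfold Cmul, C1; apply Cext; simpl; ring. lia.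
  intros. unfold eb. apply Nat.eqb_neq in H0. rewrite H0. unfold Cmul, C0; apply Cext; simpl; ring.
  intros. unfold eb. assert (Nat.eqb i j = false) by (apply Nat.eqb_neq; lia). rewrite H0. auto. Qed.

End Unitary.

Fixpoint Lc (D j : nat) : nat := match j with O => 2%nat | S j => (Lc D j * S D)%nat end.

Fixpoint gen (T : nat -> op) (D : nat) (x0 : vec) (j s : nat) : vec :=
  match j with
  | O => if Nat.eqb s 0 then x0 else eb 0
  | S j' => if Nat.ltb s (Lc D j') then gen T D x0 j' s
           else T ((s - Lc D j') / Lc D j')%nat (gen T D x0 j' ((s - Lc D j') mod Lc D j'))
  end.

Lemma Lc_pos : forall D j, (2 <= Lc D j)%nat.
Proof. induction j; simpl; nia. Qed.

Lemma Lc_mono : forall D j k, (j <= k)%nat -> (Lc D j <= Lc D k)%nat.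
Proof. intros. induction H. lia. simpl. nia. Qed.

Lemma Lc_ge : forall D j, (1 <= D)%nat -> (S j <= Lc D j)%nat.
Proof. induction j; simpl; intros. lia. specialize (IHj H). nia. Qed.

Lemma gen_stable : forall T D x0 j k s, (s < Lc D j)%nat -> (j <= k)%nat -> gen T D x0 k s = gen T D x0 j s.
Proof. intros. induction H0. auto. simpl. assert (s < Lc D m)%nat by (pose proof (Lc_mono D j m H0); lia).
  replace (Nat.ltb s (Lc D m)) with true by (symmetry; apply Nat.ltb_lt; auto). auto. Qed.

Definition gg (T : nat -> op) (D : nat) (x0 : vec) (s : nat) : vec := gen T D x0 s s.

Lemma gg_gen : forall T D x0 j s, (1 <= D)%nat -> (s < Lc D j)%nat -> gg T D x0 s = gen T D x0 j s.
Proof. intros. unfold gg. destruct (Nat.le_ge_cases j s).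
  - apply gen_stable; auto.
  - symmetry. apply gen_stable; auto. pose proof (Lc_ge D s H). lia. Qed.

Lemma gen_closure : forall T D x0 j s a, (a < D)%nat -> (s < Lc D j)%nat ->
  (Lc D j + a * Lc D j + s < Lc D (S j))%nat /\
  T a (gen T D x0 j s) = gen T D x0 (S j) (Lc D j + a * Lc D j + s).
Proof. intros. split. simpl. nia.
  simpl. replace (Nat.ltb (Lc D j + a * Lc D j + s) (Lc D j)) with false by (symmetry; apply Nat.ltb_ge; lia).
  pose proof (Lc_pos D j).
  replace (Lc D j + a * Lc D j + s - Lc D j)%nat with (a * Lc D j + s)%nat by lia.
  rewrite Nat.div_add_l by lia. rewrite Nat.div_small by lia. rewrite Nat.add_0_r.
  rewrite Nat.Div0.add_mod by lia. rewrite Nat.Div0.mod_mul. rewrite Nat.add_0_l.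
  rewrite Nat.Div0.mod_mod. rewrite Nat.mod_small by lia. auto. Qed.

Lemma is_op_l2 : forall T x, is_op T -> l2 x -> l2 (T x).
Proof. intros T x [_ [c Hc]] [r Hr]. exists (c * r). apply Hc; auto. Qed.

Lemma gen_l2 : forall T D x0, (forall a, (a < D)%nat -> is_op (T a)) -> l2 x0 ->
  forall j s, (s < Lc D j)%nat -> l2 (gen T D x0 j s).
Proof. induction j; simpl; intros.
  - destruct (Nat.eqb s 0); auto. apply l2_eb.
  - destruct (Nat.ltb s (Lc D j)) eqn:E. apply IHj. apply Nat.ltb_lt; auto.
    apply Nat.ltb_ge in E. pose proof (Lc_pos D j).
    apply is_op_l2. apply H. apply Nat.Div0.div_lt_upper_bound. nia.
    apply IHj. apply Nat.mod_upper_bound. lia. Qed.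

Lemma Mshift_eb : forall k, Mshift (eb k) = eb (S k).
Proof. intros. apply functional_extensionality. intro m. destruct m; simpl; auto. Qed.

Lemma eb_gen : forall T D x0 mi, (mi < D)%nat -> T mi = Mshift ->
  forall k, exists s, (s < Lc D k)%nat /\ gen T D x0 k s = eb k.
Proof. induction k.
  - exists 1%nat. split. pose proof (Lc_pos D 0). lia. reflexivity.
  - destruct IHk as [s [Hs Hg]]. exists (Lc D k + mi * Lc D k + s)%nat.
    destruct (gen_closure T D x0 k s mi H Hs). split; auto. rewrite <- H2, Hg, H0. apply Mshift_eb. Qed.

Lemma op_comb : forall T t b h, is_op T -> (forall s, (s < t)%nat -> l2 (h s)) ->
  forall k, T (comb t b h) k = comb t b (fun s => T (h s)) k.
Proof. intros T t b h [Hlin _]. induction t; intros Hh k.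
  - assert (comb 0 b h = vadd (vscale (Copp C1) vzero) vzero).
    { apply functional_extensionality; intro. unfold comb, vsumn, vadd, vscale, vzero; simpl.
      unfold Cadd, Cmul, Copp, C0, C1; apply Cext; simpl; ring. }
    rewrite H, Hlin by apply l2_zero. unfold vadd, vscale, comb, vsumn. simpl.
    unfold Cadd, Cmul, Copp, C0, C1; apply Cext; simpl; ring.
  - assert (comb (S t) b h = vadd (vscale (b t) (h t)) (comb t b h)).
    { apply functional_extensionality; intro. unfold comb, vsumn, vadd, vscale; simpl.
      unfold Cadd; apply Cext; simpl; ring. }
    rewrite H, Hlin; auto. 2: apply l2_comb; auto. unfold vadd at 1. rewrite IHt by auto.
    unfold vscale, comb, vsumn. simpl. unfold Cadd; apply Cext; simpl; ring. Qed.

Lemma span_orth : forall g (Hg : forall s, l2 (g s)) tau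
  (Hmono : forall j k, (j <= k)%nat -> (tau j <= tau k)%nat)
  (He : forall k, exists s, (s < tau k)%nat /\ forall m, g s m = eb k m) t w,
  span t g w -> forall m, (rr g t <= m)%nat -> ip w (F g tau m) = C0.
Proof. intros g Hg tau Hmono He t w [b Hb] m Hm.
  pose proof (F_l2 g Hg tau Hmono He m) as HFm.
  rewrite (ip_ext_l _ _ _ Hb). unfold comb. rewrite ip_vsumn_l; auto. 2: intros; apply l2_scale; auto.
  apply csum_zero. intros s Hs. rewrite ip_scale_l; auto.
  destruct (gs_inv g Hg t) as [_ [HON [Hp _]]].
  rewrite (ip_ext_l _ _ _ (Hp s Hs)). unfold proj.
  rewrite (ip_ext_l _ (comb (fst (gs g t)) (fun i => ip (g s) (snd (gs g t) i)) (F g tau))).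
  2: { apply comb_ext_f. intros. symmetry. apply (F_stable g Hg tau Hmono He t i); auto. }
  rewrite (ip_comb_l (S m)). 3: unfold rr in Hm; lia. 3: lia. 2: apply (ON_F g Hg tau Hmono He).
  replace (Nat.ltb m (fst (gs g t))) with false by (symmetry; apply Nat.ltb_ge; unfold rr in Hm; lia).
  unfold Cmul, C0; apply Cext; simpl; ring. Qed.

Lemma make_unitary : forall (T : nat -> op) D mi x0,
  (forall a, (a < D)%nat -> is_op (T a)) -> (mi < D)%nat -> T mi = Mshift -> l2 x0 -> nrm2 x0 <> 0 ->
  exists u v, is_unitary u v /\ (forall k, u (eb 0) k = normz x0 k) /\
   forall a j, (a < D)%nat -> in_span_first (Lc D (S j)) (v (T a (u (eb j)))).
Proof. intros T D mi x0 HT Hmi HM Hx0 Hn.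
  assert (HD : (1 <= D)%nat) by lia.
  set (g := gg T D x0).
  assert (Hg : forall s, l2 (g s)).
  { intro s. unfold g, gg. apply gen_l2; auto. pose proof (Lc_ge D s HD). lia. }
  set (tau := Lc D).
  assert (Hmono : forall j k, (j <= k)%nat -> (tau j <= tau k)%nat) by (intros; apply Lc_mono; auto).
  assert (He : forall k, exists s, (s < tau k)%nat /\ forall m, g s m = eb k m).
  { intro k. destruct (eb_gen T D x0 mi Hmi HM k) as [s [Hs Hse]]. exists s. split; auto.
    intro m. unfold g. rewrite (gg_gen T D x0 k s); auto. rewrite Hse; auto. }
  set (Fm := F g tau).
  exists (uop Fm tau), (vop Fm). split; [|split].
  - apply unitary_uv; auto. apply ON_F; auto. apply F_zero_tau; auto. apply F_exp; auto.
  - intro k. rewrite uop_eb. 2: apply F_zero_tau; auto.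
    unfold Fm. rewrite (F_stable g Hg tau Hmono He 1 0).
    + unfold ff. simpl. unfold gs_step. simpl.
      assert (Hr : res 0 (fun _ => vzero) (g 0%nat) = x0).
      { apply functional_extensionality. intro m. unfold res, vsub, proj, comb, vsumn. simpl.
        unfold g, gg. simpl. unfold Cadd, Copp, C0; apply Cext; simpl; ring. }
      rewrite Hr. destruct (Req_EM_T (nrm2 x0) 0). contradiction. simpl. unfold upd. simpl. auto.
    + unfold rr. simpl. unfold gs_step. simpl.
      assert (Hr : res 0 (fun _ => vzero) (g 0%nat) = x0).
      { apply functional_extensionality. intro m. unfold res, vsub, proj, comb, vsumn. simpl.
        unfold g, gg. simpl. unfold Cadd, Copp, C0; apply Cext; simpl; ring. }
      rewrite Hr. destruct (Req_EM_T (nrm2 x0) 0). contradiction. simpl. lia.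
  - intros a j Ha m Hm.
    assert (Hu : uop Fm tau (eb j) = Fm j).
    { apply functional_extensionality. intro. apply uop_eb. apply F_zero_tau; auto. }
    rewrite Hu. unfold vop.
    destruct (gs_inv g Hg (tau j)) as [_ [_ [_ Hsp]]].
    pose proof (rr_tau g Hg tau Hmono He j) as Hrj.
    destruct (Hsp j ltac:(unfold rr in Hrj; lia)) as [b Hb].
    assert (EF : Fm j = comb (tau j) b g).
    { apply functional_extensionality. intro k. unfold Fm, F. apply Hb. }
    rewrite EF.
    apply (span_orth g Hg tau Hmono He (tau (S j))).
    + apply (span_ext _ _ (comb (tau j) b (fun s => T a (g s)))).
      { intro k. symmetry. apply op_comb; auto. }
      apply span_comb. intros s Hs.
      destruct (gen_closure T D x0 j s a Ha Hs) as [Hlt Heq].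
      apply (span_ext _ _ (g (Lc D j + a * Lc D j + s)%nat)).
      { intro k. unfold g. rewrite (gg_gen T D x0 j s); auto. rewrite Heq. rewrite (gg_gen T D x0 (S j)); auto. }
      apply span_gen. auto.
    + pose proof (proj1 (gs_inv g Hg (tau (S j)))). unfold rr. unfold tau in *. lia.
Qed.

Lemma sincr_ge : forall s, strictly_incr s -> forall n, (n <= s n)%nat.
Proof. intros s H n. induction n. lia. specialize (H n). lia. Qed.

Lemma sincr_mono : forall s, strictly_incr s -> forall n m, (n < m)%nat -> (s n < s m)%nat.
Proof. intros s H n m Hnm. induction Hnm. apply H. specialize (H m). lia. Qed.

Lemma sincr_comp : forall s t, strictly_incr s -> strictly_incr t -> strictly_incr (fun n => s (t n)).
Proof. intros s t Hs Ht n. apply sincr_mono; auto. Qed.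

Lemma bw_sub : forall (u : nat -> R) B, (forall n, Rabs (u n) <= B) ->
  exists s, strictly_incr s /\ exists l, Un_cv (fun n => u (s n)) l.
Proof. intros u B Hb.
  destruct (Bolzano_Weierstrass u (fun c => -B <= c <= B) (compact_P3 (-B) B)) as [l Hl].
  { intro n. specialize (Hb n). apply Rabs_le_between in Hb. auto. }
  assert (Hpick : forall N (k : nat), exists p, (N <= p)%nat /\ Rabs (u p - l) < / INR (S k)).
  { intros N k. assert (Hd : 0 < / INR (S k)) by (apply Rinv_0_lt_compat; apply lt_0_INR; lia).
    assert (Hn : neighbourhood (disc l (mkposreal _ Hd)) l) by (exists (mkposreal _ Hd); intros y Hy; auto).
    destruct (Hl _ N Hn) as [p [Hp Hv]].
    exists p. split; auto. }
  set (pick := fun N k => proj1_sig (constructive_indefinite_description _ (Hpick N k))).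
  assert (Hpk : forall N k, (N <= pick N k)%nat /\ Rabs (u (pick N k) - l) < / INR (S k)).
  { intros. unfold pick. destruct (constructive_indefinite_description _ _); simpl; auto. }
  set (s := fix s n := match n with O => pick O O | S n => pick (S (s n)) (S n) end).
  exists s. split.
  - intro n. simpl. destruct (Hpk (S (s n)) (S n)). lia.
  - exists l. intros e He. destruct (archimed_cor1 e He) as [N [HN HN0]].
    exists N. intros n Hn. unfold R_dist.
    assert (Rabs (u (s n) - l) < / INR (S n)).
    { destruct n; simpl; apply Hpk. }
    eapply Rlt_trans. apply H. eapply Rle_lt_trans. 2: apply HN.
    apply Rinv_le_contravar. apply lt_0_INR; lia. apply le_INR; lia. Qed.

Definition sel (u : nat -> R) : nat -> nat :=
  match excluded_middle_informative (exists s, strictly_incr s /\ exists l, Un_cv (fun n => u (s n)) l) with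
  | left H => proj1_sig (constructive_indefinite_description _ H)
  | right _ => fun n => n end.

Lemma sel_spec : forall u B, (forall n, Rabs (u n) <= B) ->
  strictly_incr (sel u) /\ exists l, Un_cv (fun n => u (sel u n)) l.
Proof. intros. unfold sel. destruct (excluded_middle_informative _).
  - destruct (constructive_indefinite_description _ _); simpl; auto.
  - exfalso. apply n. eapply bw_sub; eauto. Qed.

Section Diag.
Variable a : nat -> nat -> R.
Variable B : nat -> R.
Hypothesis Hb : forall k n, Rabs (a k n) <= B k.

Fixpoint psi (k : nat) : nat -> nat :=
  match k with
  | O => sel (a O)
  | S k => fun n => psi k (sel (fun m => a (S k) (psi k m)) n)
  end.

Lemma psi_spec : forall k, strictly_incr (psi k) /\ exists l, Un_cv (fun n => a k (psi k n)) l.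
Proof. induction k.
  - apply (sel_spec _ (B O)). auto.
  - destruct IHk as [Hs _]. destruct (sel_spec (fun m => a (S k) (psi k m)) (B (S k))) as [Hs' Hl]; auto.
    split; [ | exact Hl]. intro n. simpl. apply (sincr_mono (psi k) Hs). apply Hs'. Qed.

Lemma psi_sub : forall k d n, exists m, (n <= m)%nat /\ psi (k + d) n = psi k m.
Proof. intros k d. induction d; intros.
  - exists n. rewrite Nat.add_0_r. auto.
  - rewrite Nat.add_succ_r. simpl.
    destruct (sel_spec (fun m => a (S (k + d)) (psi (k + d) m)) (B (S (k + d)))) as [Hs _]; auto.
    destruct (IHd (sel (fun m => a (S (k + d)) (psi (k + d) m)) n)) as [m [Hm E]].
    exists m. split. pose proof (sincr_ge _ Hs n). lia. auto. Qed.

Definition dphi (n : nat) : nat := psi n n.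

Lemma dphi_incr : strictly_incr dphi.
Proof. intro n. unfold dphi. simpl.
  destruct (sel_spec (fun m => a (S n) (psi n m)) (B (S n))) as [Hs _]; auto.
  destruct (psi_spec n) as [Hp _]. apply sincr_mono; auto. pose proof (sincr_ge _ Hs (S n)). lia. Qed.

Lemma dphi_cv : forall k, exists l, Un_cv (fun n => a k (dphi n)) l.
Proof. intros. destruct (psi_spec k) as [_ [l Hl]]. exists l. intros e He.
  destruct (Hl e He) as [N HN]. exists (Nat.max N k). intros n Hn.
  destruct (psi_sub k (n - k) n) as [m [Hm E]]. unfold dphi.
  replace (k + (n - k))%nat with n in E by lia. rewrite E. apply HN. lia. Qed.
End Diag.

Lemma diag : forall (a : nat -> nat -> R) (B : nat -> R), (forall k n, Rabs (a k n) <= B k) ->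
  exists phi, strictly_incr phi /\ forall k, exists l, Un_cv (fun n => a k (phi n)) l.
Proof. intros. exists (dphi a). split. apply (dphi_incr a B); auto. apply (dphi_cv a B); auto. Qed.

Definition cvC (s : nat -> C) : Prop :=
  exists l1 l2, Un_cv (fun n => fst (s n)) l1 /\ Un_cv (fun n => snd (s n)) l2.

Lemma cvC_csum : forall I (x : nat -> C) (s : nat -> nat -> C), (forall j, (j < I)%nat -> cvC (fun n => s n j)) ->
  cvC (fun n => csum I (fun j => Cmul (x j) (s n j))).
Proof. induction I; intros.
  - exists 0, 0. simpl. unfold C0; simpl. split; apply cv_const.
  - destruct (IHI x s) as [l1 [l2 [H1 H2]]]. intros; apply H; lia.
    destruct (H I ltac:(lia)) as [m1 [m2 [H3 H4]]].
    exists (l1 + (fst (x I) * m1 - snd (x I) * m2)), (l2 + (fst (x I) * m2 + snd (x I) * m1)). simpl. split.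
    + apply CV_plus; auto. apply CV_minus; apply CV_mult; auto; apply cv_const.
    + apply CV_plus; auto. apply CV_plus; apply CV_mult; auto; apply cv_const. Qed.

Lemma cv_near : forall u l, Un_cv u l -> forall d, 0 < d -> exists N, forall n, (N <= n)%nat -> Rabs (u n - l) < d.
Proof. intros. destruct (H d H0) as [N HN]. exists N. intros. apply HN. lia. Qed.

Lemma cauC : forall s, cvC s -> forall e, 0 < e -> exists N, forall n m, (N <= n)%nat -> (N <= m)%nat ->
  Cnorm2 (Cadd (s n) (Copp (s m))) <= e.
Proof. intros s [l1 [l2 [H1 H2]]] e He.
  set (dl := Rmin 1 (e / 8)).
  assert (Hd : 0 < dl) by (unfold dl; apply Rmin_glb_lt; lra).
  assert (Hd1 : dl <= 1) by apply Rmin_l. assert (Hd2 : dl <= e / 8) by apply Rmin_r.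
  destruct (cv_near _ _ H1 dl Hd) as [N1 HN1]. destruct (cv_near _ _ H2 dl Hd) as [N2 HN2].
  exists (Nat.max N1 N2). intros.
  pose proof (HN1 n ltac:(lia)). pose proof (HN1 m ltac:(lia)).
  pose proof (HN2 n ltac:(lia)). pose proof (HN2 m ltac:(lia)).
  unfold Cnorm2, Cadd, Copp; simpl.
  apply Rabs_def2 in H3; apply Rabs_def2 in H4; apply Rabs_def2 in H5; apply Rabs_def2 in H6.
  destruct H3, H4, H5, H6.
  set (x1 := fst (s n) + - fst (s m)). set (x2 := snd (s n) + - snd (s m)).
  assert (-2*dl <= x1 <= 2*dl) by (unfold x1; split; lra).
  assert (-2*dl <= x2 <= 2*dl) by (unfold x2; split; lra).
  assert (x1 * x1 <= 4 * dl * dl) by nra. assert (x2 * x2 <= 4 * dl * dl) by nra.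
  nra. Qed.

Lemma sum_fin_bound : forall (b : nat -> R) K e n, 0 <= e -> (forall k, 0 <= b k) ->
  (forall k, (k < K)%nat -> b k <= e) -> (forall k, (K <= k)%nat -> b k = 0) ->
  sum_f_R0 b n <= INR K * e.
Proof. intros. assert (forall n, sum_f_R0 b n <= INR (Nat.min (S n) K) * e).
  { induction n0; cbn [sum_f_R0].
    - destruct K. rewrite H2 by lia. simpl. lra. replace (Nat.min 1 (S K)) with 1%nat by lia. simpl. rewrite Rmult_1_l. apply H1; lia.
    - destruct (Compare_dec.le_lt_dec K (S n0)).
      + rewrite H2 by lia. replace (Nat.min (S (S n0)) K) with (Nat.min (S n0) K) by lia. lra.
      + replace (Nat.min (S (S n0)) K) with (S (Nat.min (S n0) K)) by lia. rewrite S_INR.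
        pose proof (H1 (S n0) l). lra. }
  eapply Rle_trans. apply H3. apply Rmult_le_compat_r; auto. apply le_INR; lia. Qed.

Lemma exN_fin : forall K (P : nat -> nat -> Prop), (forall k N N', (N <= N')%nat -> P k N -> P k N') ->
  (forall k, (k < K)%nat -> exists N, P k N) -> exists N, forall k, (k < K)%nat -> P k N.
Proof. induction K; intros. exists O. intros; lia.
  destruct (IHK P H) as [N1 HN1]. intros; apply H0; lia. destruct (H0 K ltac:(lia)) as [N2 HN2].
  exists (Nat.max N1 N2). intros. destruct (Nat.eq_dec k K). subst. apply (H K N2); auto; lia.
  apply (H k N1); auto. lia. apply HN1; lia. Qed.

Lemma fin_small : forall (w : nat -> vec) K, (forall n k, (K <= k)%nat -> w n k = C0) ->
  (forall k, (k < K)%nat -> cvC (fun n => w n k)) ->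
  forall eps, 0 < eps -> exists N, forall n m, (N <= n)%nat -> (N <= m)%nat -> vnorm_le (vsub (w n) (w m)) eps.
Proof. intros w K Hz Hc eps He.
  set (e := eps * eps / (INR K + 1)).
  assert (HK : 0 < INR K + 1) by (pose proof (pos_INR K); lra).
  assert (Hee : 0 < e) by (unfold e; apply Rdiv_lt_0_compat; nra).
  destruct (exN_fin K (fun k N => forall n m, (N <= n)%nat -> (N <= m)%nat -> Cnorm2 (Cadd (w n k) (Copp (w m k))) <= e)) as [N HN].
  { intros. apply H0; lia. }
  { intros. apply cauC; auto. }
  exists N. intros n m Hn Hm. split. lra. intro p.
  eapply Rle_trans. apply (sum_fin_bound _ K e); auto. lra.
  intros; apply Cnorm2_ge0. intros. apply HN; auto.
  intros. unfold vsub. rewrite !Hz by auto. unfold Cnorm2, Cadd, Copp, C0; simpl; ring.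
  unfold e. apply (Rmult_le_reg_r (INR K + 1)); auto. field_simplify; try lra. nra. Qed.

Lemma term_le_sum : forall (a : nat -> R) m, (forall k, 0 <= a k) -> a m <= sum_f_R0 a m.
Proof. intros. destruct m. simpl; lra. simpl. assert (0 <= sum_f_R0 a m).
  { clear -H. induction m; simpl. apply H. pose proof (H (S m)). lra. } lra. Qed.

Lemma lim_le : forall u l B, Un_cv u l -> (exists N, forall m, (N <= m)%nat -> u m <= B) -> l <= B.
Proof. intros u l B Hu [N HN]. apply Rnot_lt_le. intro. assert (0 < l - B) by lra.
  destruct (Hu _ H0) as [M HM]. specialize (HM (Nat.max M N) ltac:(lia)). specialize (HN (Nat.max M N) ltac:(lia)).
  unfold R_dist in HM. apply Rabs_def2 in HM. lra. Qed.

Lemma cv_psum : forall (A : nat -> C) (Bm : nat -> nat -> C) (L : nat -> C) p,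
  (forall k, Un_cv (fun m => fst (Bm m k)) (fst (L k)) /\ Un_cv (fun m => snd (Bm m k)) (snd (L k))) ->
  Un_cv (fun m => sum_f_R0 (fun k => Cnorm2 (Cadd (A k) (Copp (Bm m k)))) p)
        (sum_f_R0 (fun k => Cnorm2 (Cadd (A k) (Copp (L k)))) p).
Proof. intros. assert (Ht : forall k, Un_cv (fun m => Cnorm2 (Cadd (A k) (Copp (Bm m k)))) (Cnorm2 (Cadd (A k) (Copp (L k))))).
  { intro k. destruct (H k) as [H1 H2]. unfold Cnorm2, Cadd, Copp; simpl.
    assert (E1 := CV_minus _ _ _ _ (cv_const (fst (A k))) H1). assert (E2 := CV_minus _ _ _ _ (cv_const (snd (A k))) H2).
    eapply Un_cv_ext. 2: apply (CV_plus _ _ _ _ (CV_mult _ _ _ _ E1 E1) (CV_mult _ _ _ _ E2 E2)).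
    intro; simpl; ring_simplify; ring. 
    }
  induction p; simpl. apply Ht. apply CV_plus; auto. Qed.

Lemma cvC_ext : forall s s', (forall n, s n = s' n) -> cvC s -> cvC s'.
Proof. intros s s' H [l1 [l2 [H1 H2]]]. exists l1, l2.
  split; [apply (Un_cv_ext (fun n => fst (s n))) | apply (Un_cv_ext (fun n => snd (s n)))]; auto; intro; rewrite H; auto. Qed.

Fixpoint nmax (Nf : nat -> nat) (n : nat) : nat := match n with O => O | S n' => Nat.max (nmax Nf n') (Nf n') end.
Lemma nmax_ge : forall Nf I j, (j < I)%nat -> (Nf j <= nmax Nf I)%nat.
Proof. induction I; intros. lia. simpl. destruct (Nat.eq_dec j I). subst. apply Nat.le_max_r.
  apply Nat.le_trans with (nmax Nf I). apply IHI. lia. apply Nat.le_max_l. Qed.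

Lemma trunc_comb : forall I x k, trunc I x k = comb I x eb k.
Proof. intros. rewrite comb_pt. unfold trunc. destruct (Nat.ltb k I) eqn:E.
  - apply Nat.ltb_lt in E. rewrite (csum_single _ _ k); auto. unfold eb. rewrite Nat.eqb_refl. unfold Cmul, C1; apply Cext; simpl; ring.
    intros. unfold eb. assert (Nat.eqb k i = false) by (apply Nat.eqb_neq; lia). rewrite H1. unfold Cmul, C0; apply Cext; simpl; ring.
  - apply Nat.ltb_ge in E. symmetry. apply csum_zero. intros. unfold eb.
    assert (Nat.eqb k i = false) by (apply Nat.eqb_neq; lia). rewrite H0. unfold Cmul, C0; apply Cext; simpl; ring. Qed.

Section Compact.
Variable d : nat.
Variable Z : nat -> tuple.
Variable c : R.
Variable Nf : nat -> nat.
Hypothesis Htup : forall n, is_tuple d (Z n).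
Hypothesis Hbd : forall n, tnorm_le d (Z n) c.
Hypothesis Hsupp : forall n i j, (i < d)%nat -> in_span_first (Nf j) (Z n i (eb j)).
Hypothesis Hd : (0 < d)%nat.

Lemma c_nonneg : 0 <= c.
Proof. destruct (Hbd 0%nat 0%nat Hd (eb 0) 1 (eb_norm 0)) as [H _]. lra. Qed.

Lemma entry_bd : forall n i j m, (i < d)%nat -> Rabs (fst (Z n i (eb j) m)) <= c /\ Rabs (snd (Z n i (eb j) m)) <= c.
Proof. intros. destruct (Hbd n i H (eb j) 1 (eb_norm j)) as [_ Hs].
  specialize (Hs m). pose proof (term_le_sum (fun k => Cnorm2 (Z n i (eb j) k)) m (fun k => Cnorm2_ge0 _)).
  simpl in H0. rewrite Rmult_1_r in Hs. pose proof c_nonneg.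
  assert (Hm : Cnorm2 (Z n i (eb j) m) <= c * c) by lra. clear H0 Hs. unfold Cnorm2 in Hm.
  destruct (Z n i (eb j) m) as [a b]; simpl in *.
  split; apply Rabs_le; split; nra. Qed.

Definition enc (n k : nat) : R :=
  let (p, q) := of_nat k in let (i, j) := of_nat p in let (m, b) := of_nat q in
  if Nat.ltb i d then (if Nat.eqb b 0 then fst (Z n i (eb j) m) else snd (Z n i (eb j) m)) else 0.

Lemma enc_bd : forall k n, Rabs (enc n k) <= c.
Proof. intros. unfold enc. destruct (of_nat k) as [p q]. destruct (of_nat p) as [i j]. destruct (of_nat q) as [m b].
  destruct (Nat.ltb i d) eqn:E. apply Nat.ltb_lt in E. destruct (Nat.eqb b 0); apply entry_bd; auto.
  rewrite Rabs_R0. apply c_nonneg. Qed.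

Definition phiC : nat -> nat := proj1_sig (constructive_indefinite_description _
  (diag (fun k n => enc n k) (fun _ => c) (fun k n => enc_bd k n))).

Lemma phiC_spec : strictly_incr phiC /\ forall k, exists l, Un_cv (fun n => enc (phiC n) k) l.
Proof. unfold phiC. destruct (constructive_indefinite_description _ _). simpl. auto. Qed.

Lemma entries_cv : forall i j m, (i < d)%nat -> cvC (fun n => Z (phiC n) i (eb j) m).
Proof. intros. destruct (proj2 phiC_spec (to_nat (to_nat (i, j), to_nat (m, 0%nat)))) as [l1 H1].
  destruct (proj2 phiC_spec (to_nat (to_nat (i, j), to_nat (m, 1%nat)))) as [l2 H2].
  exists l1, l2. unfold enc in H1, H2. rewrite !cancel_of_to in H1, H2.
  replace (Nat.ltb i d) with true in H1, H2 by (symmetry; apply Nat.ltb_lt; auto). simpl in H1, H2. auto. Qed.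

Lemma Zlin : forall n i a x y, (i < d)%nat -> l2 x -> l2 y ->
  Z n i (vadd (vscale a x) y) = vadd (vscale a (Z n i x)) (Z n i y).
Proof. intros. apply functional_extensionality. intro k. apply (proj1 (Htup n i H)); auto. Qed.

Lemma Zbound : forall n i x r, (i < d)%nat -> vnorm_le x r -> vnorm_le (Z n i x) (c * r).
Proof. intros. apply (Hbd n i H); auto. Qed.

Lemma Zcauchy : forall i x, (i < d)%nat -> l2 x -> forall eps, 0 < eps -> exists N, forall n m, (N <= n)%nat -> (N <= m)%nat ->
  vnorm_le (vsub (Z (phiC n) i x) (Z (phiC m) i x)) eps.
Proof. intros i x Hi Hx eps He. pose proof c_nonneg as Hc.
  set (dl := eps / (4 * (c + 1))).
  assert (Hdl : 0 < dl) by (unfold dl; apply Rdiv_lt_0_compat; lra).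
  assert (Hcd : c * dl <= eps / 4).
  { unfold dl. apply (Rmult_le_reg_r (4 * (c+1))). lra. field_simplify; try lra; try nra. }
  destruct (tail_small x Hx (dl * dl) ltac:(nra)) as [I HI].
  set (t := trunc I x). set (w := vsub x t).
  assert (Ht : l2 t) by (apply l2_trunc; auto).
  assert (Hw : vnorm_le w dl).
  { apply vnorm_le_iff. apply l2_sub; auto. split. lra. apply HI; lia. }
  set (Kb := nmax Nf I).
  set (W := fun n => Z (phiC n) i t).
  assert (EW : forall n k, W n k = comb I x (fun j => Z (phiC n) i (eb j)) k).
  { intros. unfold W. replace t with (comb I x eb). apply op_comb. apply Htup; auto. intros; apply l2_eb.
    apply functional_extensionality; intro; symmetry; apply trunc_comb. }
  destruct (fin_small W Kb) with (eps := eps / 2) as [N HN].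
  { intros n k Hk. rewrite EW. rewrite comb_pt. apply csum_zero. intros j Hj.
    pose proof (nmax_ge Nf I j Hj). rewrite (Hsupp (phiC n) i j Hi k) by lia. unfold Cmul, C0; apply Cext; simpl; ring. }
  { intros k Hk. apply (cvC_ext (fun n => csum I (fun j => Cmul (x j) (Z (phiC n) i (eb j) k)))).
    intro n. rewrite EW. rewrite comb_pt. auto.
    apply cvC_csum. intros. apply entries_cv; auto. }
  lra.
  exists N. intros n m Hn Hm.
  assert (Ex : x = vadd (vscale C1 t) w).
  { apply functional_extensionality; intro k. unfold w, t, vadd, vscale, vsub.
    unfold Cadd, Cmul, Copp, C1; apply Cext; simpl; ring. }
  assert (E : vsub (Z (phiC n) i x) (Z (phiC m) i x) = vadd (vsub (W n) (W m)) (vsub (Z (phiC n) i w) (Z (phiC m) i w))).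
  { rewrite Ex. rewrite !Zlin; auto. 2,3: apply vnorm_le_l2 with dl; auto.
    apply functional_extensionality; intro k. unfold W, vadd, vsub, vscale. fold t.
    unfold Cadd, Cmul, Copp, C1; apply Cext; simpl; ring. }
  rewrite E. apply vnorm_mono with (eps / 2 + (c * dl + c * dl)). 2: lra.
  apply vnorm_add. apply HN; auto. apply vnorm_sub; apply Zbound; auto. Qed.

Definition Ylim (i : nat) (x : vec) (k : nat) : C :=
  (real (Lim_seq (fun n => fst (Z (phiC n) i x k))), real (Lim_seq (fun n => snd (Z (phiC n) i x k)))).

Lemma sq2_bound : forall a b e, 0 < e -> a * a + b * b <= e * e -> Rabs a <= e /\ Rabs b <= e.
Proof. intros. split; apply Rabs_le; split; nra. Qed.

Lemma cauchy_cv : forall u : nat -> R, (forall e, 0 < e -> exists N, forall n m, (N <= n)%nat -> (N <= m)%nat -> Rabs (u n - u m) <= e) ->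
  Un_cv u (real (Lim_seq u)).
Proof. intros. apply is_lim_seq_Reals. apply Lim_seq_correct'. apply ex_lim_seq_cauchy_corr.
  intro eps. destruct eps as [e He]. simpl. destruct (H (e/2) ltac:(lra)) as [N HN]. exists N. intros.
  specialize (HN n m H0 H1). lra. Qed.

Lemma Ycv : forall i x k, (i < d)%nat -> l2 x ->
  Un_cv (fun n => fst (Z (phiC n) i x k)) (fst (Ylim i x k)) /\ Un_cv (fun n => snd (Z (phiC n) i x k)) (snd (Ylim i x k)).
Proof. intros. unfold Ylim; simpl.
  assert (Hc : forall e, 0 < e -> exists N, forall n m, (N <= n)%nat -> (N <= m)%nat ->
     Rabs (fst (Z (phiC n) i x k) - fst (Z (phiC m) i x k)) <= e /\ Rabs (snd (Z (phiC n) i x k) - snd (Z (phiC m) i x k)) <= e).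
  { intros e He. destruct (Zcauchy i x H H0 e He) as [N HN]. exists N. intros n m Hn Hm.
    destruct (HN n m Hn Hm) as [_ Hs]. specialize (Hs k).
    pose proof (term_le_sum (fun j => Cnorm2 (vsub (Z (phiC n) i x) (Z (phiC m) i x) j)) k (fun j => Cnorm2_ge0 _)).
    simpl in H1. assert (Hk : Cnorm2 (vsub (Z (phiC n) i x) (Z (phiC m) i x) k) <= e * e) by lra. clear H1 Hs.
    unfold vsub, Cnorm2, Cadd, Copp in Hk. simpl in Hk.
    apply sq2_bound in Hk; auto. }
  split; apply cauchy_cv; intros e He; destruct (Hc e He) as [N HN]; exists N; intros; apply HN; auto. Qed.

Lemma Y_sot : sot_conv_sub d Z phiC Ylim.
Proof. intros i Hi x Hx eps He. destruct (Zcauchy i x Hi Hx (eps / 2) ltac:(lra)) as [N HN].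
  exists N. intros n Hn. split. lra. intro p.
  apply (lim_le (fun m => sum_f_R0 (fun k => Cnorm2 (Cadd (Z (phiC n) i x k) (Copp (Z (phiC m) i x k)))) p)).
  - apply (cv_psum (fun k => Z (phiC n) i x k) (fun m k => Z (phiC m) i x k) (Ylim i x)). intro; apply Ycv; auto.
  - exists N. intros m Hm. destruct (HN n m Hn Hm) as [_ Hs]. specialize (Hs p). unfold vsub in Hs. nra. Qed.

Lemma Y_tuple : is_tuple d Ylim.
Proof. intros i Hi. split.
  - intros a x y Hx Hy k. assert (Hxy : l2 (vadd (vscale a x) y)) by (apply l2_add; auto; apply l2_scale; auto).
    destruct (Ycv i _ k Hi Hxy) as [A1 A2]. destruct (Ycv i x k Hi Hx) as [B1 B2]. destruct (Ycv i y k Hi Hy) as [C1' C2'].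
    assert (E1 : forall n, fst (Z (phiC n) i (vadd (vscale a x) y) k) = fst a * fst (Z (phiC n) i x k) - snd a * snd (Z (phiC n) i x k) + fst (Z (phiC n) i y k)).
    { intro. rewrite Zlin; auto; unfold vadd, vscale, Cadd, Cmul; simpl; ring. }
    assert (E2 : forall n, snd (Z (phiC n) i (vadd (vscale a x) y) k) = fst a * snd (Z (phiC n) i x k) + snd a * fst (Z (phiC n) i x k) + snd (Z (phiC n) i y k)).
    { intro. rewrite Zlin; auto; unfold vadd, vscale, Cadd, Cmul; simpl; ring. }
    apply (Un_cv_ext _ _ E1) in A1. apply (Un_cv_ext _ _ E2) in A2.
    apply Cext; unfold vadd, vscale, Cadd, Cmul; simpl.
    + eapply UL_sequence. apply A1. apply CV_plus; auto. apply CV_minus; apply CV_mult; auto; apply cv_const.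
    + eapply UL_sequence. apply A2. apply CV_plus; auto. apply CV_plus; apply CV_mult; auto; apply cv_const.
  - exists c. intros x r Hx. pose proof c_nonneg. split. destruct Hx; nra. intro p.
    apply (lim_le (fun m => sum_f_R0 (fun k => Cnorm2 (Cadd C0 (Copp (Z (phiC m) i x k)))) p)).
    + replace (sum_f_R0 (fun i0 => Cnorm2 (Ylim i x i0)) p) with (sum_f_R0 (fun k => Cnorm2 (Cadd C0 (Copp (Ylim i x k)))) p).
      apply (cv_psum (fun _ => C0) (fun m k => Z (phiC m) i x k) (Ylim i x)). intro; apply Ycv; auto.
      eapply vnorm_le_l2; eauto.
      apply sum_eq; intros. unfold Cnorm2, Cadd, Copp, C0; simpl; ring.
    + exists O. intros m _. destruct (Zbound (phiC m) i x r Hi Hx) as [_ Hs]. specialize (Hs p).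
      replace (sum_f_R0 (fun k => Cnorm2 (Cadd C0 (Copp (Z (phiC m) i x k)))) p) with (sum_f_R0 (fun k => Cnorm2 (Z (phiC m) i x k)) p). auto.
      apply sum_eq; intros. unfold Cnorm2, Cadd, Copp, C0; simpl; ring. Qed.
End Compact.

Lemma compactness : forall d (Z : nat -> tuple) c (Nf : nat -> nat),
  (forall n, is_tuple d (Z n)) -> (forall n, tnorm_le d (Z n) c) ->
  (forall n i j, (i < d)%nat -> in_span_first (Nf j) (Z n i (eb j))) ->
  exists phi Y, strictly_incr phi /\ is_tuple d Y /\ sot_conv_sub d Z phi Y.
Proof. intros. destruct d.
  - exists (fun n => n), (fun _ x => x). split. intro; lia. split. intros i Hi; lia. intros i Hi; lia.
  - assert (Hd' : (0 < S d)%nat) by lia.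
    exists (phiC (S d) Z c H0 Hd'), (Ylim (S d) Z c H0 Hd'). split. apply phiC_spec. split.
    apply (Y_tuple _ _ _ Nf); auto. apply (Y_sot _ _ _ Nf); auto. Qed.

Lemma choice_fun {T : Type} (P : nat -> T -> Prop) : (forall n, exists a, P n a) -> exists f, forall n, P n (f n).
Proof. intros. exists (fun n => proj1_sig (constructive_indefinite_description _ (H n))). intro n.
  apply (proj2_sig (constructive_indefinite_description _ (H n))). Qed.

Lemma u_l2 : forall u v x, is_unitary u v -> l2 x -> l2 (u x).
Proof. intros u v x [Hu _] Hx. apply is_op_l2; auto. Qed.

Lemma v_iso : forall u v y s, is_unitary u v -> l2 y -> (vnorm_le (v y) s <-> vnorm_le y s).
Proof. intros u v y s Hun Hy. destruct Hun as [_ [_ [_ [Huv Hiso]]]].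
  assert (u (v y) = y) by (apply functional_extensionality; apply Huv; auto).
  rewrite (Hiso (v y) s). rewrite H. tauto. Qed.

Lemma opnorm_mono : forall T c c', opnorm_le T c -> c <= c' -> opnorm_le T c'.
Proof. intros T c c' H Hc x r Hx. apply vnorm_mono with (c * r). apply H; auto.
  destruct Hx. apply Rmult_le_compat_r; auto. Qed.

Lemma conj_op : forall u v T c, is_unitary u v -> is_op T -> opnorm_le T c ->
  is_op (fun x => v (T (u x))) /\ opnorm_le (fun x => v (T (u x))) c.
Proof. intros u v T c Hun HT Hc.
  assert (Hun' := Hun). destruct Hun' as [[Hul [cu Hcu]] [[Hvl [cv Hcv]] [Hvu [Huv Hiso]]]].
  assert (Hc2 : opnorm_le (fun x => v (T (u x))) c).
  { intros x r Hx. assert (Hl : l2 (T (u x))). { apply is_op_l2; auto. apply (u_l2 u v); auto. apply (vnorm_le_l2 x r); auto. }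
    apply (proj2 (v_iso u v (T (u x)) (c*r) Hun Hl)). apply Hc. apply (proj1 (Hiso x r)); auto. }
  split; auto. split; [|exists c; auto].
  intros a x y Hx Hy k.
  assert (Eu : u (vadd (vscale a x) y) = vadd (vscale a (u x)) (u y)) by (apply functional_extensionality; apply Hul; auto).
  rewrite Eu.
  assert (ET : T (vadd (vscale a (u x)) (u y)) = vadd (vscale a (T (u x))) (T (u y))).
  { apply functional_extensionality. apply (proj1 HT); apply u_l2 with v; auto. }
  rewrite ET. apply Hvl; apply is_op_l2; auto; apply u_l2 with v; auto. Qed.

Lemma conj_tuple_ok : forall d u v X c, is_unitary u v -> is_tuple d X -> tnorm_le d X c ->
  is_tuple d (conj_tuple u v X) /\ tnorm_le d (conj_tuple u v X) c.
Proof. intros. split; intros i Hi; destruct (conj_op u v (X i) c H (H0 i Hi) (H1 i Hi)); auto. Qed.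

Lemma tuple_bound : forall d X, is_tuple d X -> exists c, 0 <= c /\ tnorm_le d X c.
Proof. intros d X H. assert (forall m, (m <= d)%nat -> exists c, 0 <= c /\ forall i, (i < m)%nat -> opnorm_le (X i) c).
  { induction m; intros. exists 0. split. lra. intros; lia.
    destruct (IHm ltac:(lia)) as [c1 [Hc1 H1]]. destruct (proj2 (H m ltac:(lia))) as [c2 H2].
    exists (Rmax c1 (Rmax c2 0)). split. eapply Rle_trans. 2: apply Rmax_r. apply Rmax_r. intros.
    destruct (Nat.eq_dec i m). subst. apply opnorm_mono with c2; auto. eapply Rle_trans. 2: apply Rmax_r. apply Rmax_l.
    apply opnorm_mono with c1. apply H1; lia. apply Rmax_l. }
  destruct (H0 d (le_n _)) as [c [Hc Hc']]. exists c. split; auto. Qed.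

Lemma Mshift_sum : forall x n, sum_f_R0 (fun k => Cnorm2 (Mshift x k)) (S n) = sum_f_R0 (fun k => Cnorm2 (x k)) n.
Proof. intros. induction n. simpl. unfold Cnorm2, C0; simpl; ring.
  rewrite sum_N_predN by lia. simpl pred. rewrite IHn. simpl. auto. Qed.

Lemma Mshift_op : is_op Mshift.
Proof. split.
  - intros a x y Hx Hy k. destruct k; simpl; unfold vadd, vscale, Cadd, Cmul, C0; simpl; auto. apply Cext; simpl; ring.
  - exists 1. intros x r [Hr H]. split. lra. intro n. rewrite Rmult_1_l. destruct n.
    simpl. unfold Cnorm2, C0; simpl. nra. rewrite Mshift_sum. auto. Qed.

Lemma op_zero : forall T, is_op T -> forall k, T vzero k = C0.
Proof. intros T [Hl _] k. pose proof (Hl (Copp C1) vzero vzero l2_zero l2_zero k).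
  replace (vadd (vscale (Copp C1) vzero) vzero) with vzero in H.
  rewrite H. unfold vadd, vscale, Cadd, Cmul, Copp, C1; apply Cext; simpl; ring.
  apply functional_extensionality; intro; unfold vadd, vscale, vzero, Cadd, Cmul, Copp, C1, C0; apply Cext; simpl; ring. Qed.

Lemma letter_op_ok : forall d X a, is_tuple d X -> (a <= d)%nat -> is_op (letter_op d X a).
Proof. intros. unfold letter_op. destruct (Nat.eqb a d) eqn:E. apply Mshift_op.
  apply Nat.eqb_neq in E. apply H. lia. Qed.

Lemma word_l2 : forall d X w x, is_tuple d X -> (forall a, In a w -> (a <= d)%nat) -> l2 x -> l2 (word_eval d X w x).
Proof. induction w; simpl; intros; auto. apply is_op_l2. apply letter_op_ok; auto. apply IHw; auto. Qed.

Lemma poly_l2 : forall d X k p x, is_tuple d X -> poly_in_P k d p -> l2 x -> l2 (poly_eval d X p x).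
Proof. induction p as [|[c w] p IH]; simpl; intros. apply l2_zero.
  apply l2_add. apply l2_scale. apply word_l2; auto. intros. apply (proj2 (H0 (c, w) (or_introl eq_refl))). auto.
  apply IH; auto. intros cw Hcw. apply H0; right; auto. Qed.

Definition pre (i : nat) (cw : C * list nat) : C * list nat := (fst cw, i :: snd cw).

Lemma op_poly : forall d X i k p x, is_tuple d X -> (i < d)%nat -> poly_in_P k d p -> l2 x ->
  forall m, X i (poly_eval d X p x) m = poly_eval d X (map (pre i) p) x m.
Proof. intros d X i k p x HX Hi. induction p as [|[c w] p IH]; simpl; intros Hp Hx m.
  - apply op_zero. apply HX; auto.
  - assert (Hw : l2 (word_eval d X w x)). { apply word_l2; auto. intros. apply (proj2 (Hp (c, w) (or_introl eq_refl))). auto. }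
    assert (Hpp : poly_in_P k d p) by (intros cw Hcw; apply Hp; right; auto).
    rewrite (proj1 (HX i Hi)); auto. 2: apply (poly_l2 d X k); auto.
    unfold vadd, vscale. rewrite IH; auto. unfold letter_op.
    replace (Nat.eqb i d) with false by (symmetry; apply Nat.eqb_neq; lia). auto. Qed.

Lemma shift_col : forall d X u v, is_tuple d X -> shift_form_unitary d X u v ->
  forall i j, (i < d)%nat -> in_span_first (alpha (S j) d) (v (X i (u (eb j)))).
Proof. intros d X u v HX [Hun Hk] i j Hi.
  destruct (proj1 (Hk j) (eb j)) as [p [Hp Hpe]].
  { intros m Hm. unfold eb. replace (Nat.eqb m j) with false by (symmetry; apply Nat.eqb_neq; lia). auto. }
  assert (Eu : u (eb j) = poly_eval d X p (eb 0)) by (apply functional_extensionality; auto).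
  apply (proj2 (Hk (S j))). exists (map (pre i) p). split.
  - intros cw Hcw. apply in_map_iff in Hcw. destruct Hcw as [[c w] [E Hin]]. subst cw. unfold pre; simpl.
    destruct (Hp (c, w) Hin) as [H1 H2]. simpl in H1, H2. split. lia. intros a [Ha|Ha]. lia. auto.
  - intro m. rewrite Eu. apply (op_poly d X i j); auto. apply l2_eb. Qed.

Lemma nrm2_eb : forall k, nrm2 (eb k) = 1.
Proof. intro k. apply Rle_antisym.
  - destruct (proj1 (vnorm_le_iff _ 1 (l2_eb k)) (eb_norm k)). lra.
  - pose proof (ps_le_nrm2 (eb k) (l2_eb k) k). unfold sq in H.
    rewrite (sum_single _ k) in H. assert (Cnorm2 (eb k k) = 1) by (unfold eb; rewrite Nat.eqb_refl; unfold Cnorm2, C1; simpl; ring). lra.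
    intros. unfold eb. apply Nat.eqb_neq in H0. rewrite H0. unfold Cnorm2, C0; simpl; ring. Qed.

Lemma part_i_a : forall d (X : nat -> tuple), (forall n, is_tuple d (X n)) -> (exists c, forall n, tnorm_le d (X n) c) ->
  forall u v : nat -> op, (forall n, shift_form_unitary d (X n) (u n) (v n)) ->
  exists phi Y, strictly_incr phi /\ is_tuple d Y /\ sot_conv_sub d (fun n => conj_tuple (u n) (v n) (X n)) phi Y.
Proof. intros d X HX [c Hc] u v Hs. apply (compactness d _ c (fun j => alpha (S j) d)).
  - intro n. apply (conj_tuple_ok d (u n) (v n) (X n) c); auto. apply (Hs n).
  - intro n. apply (conj_tuple_ok d (u n) (v n) (X n) c); auto. apply (Hs n).
  - intros n i j Hi. unfold conj_tuple. apply (shift_col d (X n)); auto. Qed.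

Lemma part_i_b : forall d (X : nat -> tuple), (forall n, is_tuple d (X n)) -> (exists c, forall n, tnorm_le d (X n) c) ->
  exists (U V : nat -> op) (phi : nat -> nat) (Y : tuple),
    (forall n, is_unitary (U n) (V n)) /\ strictly_incr phi /\ is_tuple d Y /\
    sot_conv_sub d (fun n => conj_tuple (U n) (V n) (X n)) phi Y.
Proof. intros d X HX [c Hc].
  assert (Hper : forall n, exists uv : op * op, is_unitary (fst uv) (snd uv) /\
     forall a j, (a < S d)%nat -> in_span_first (Lc (S d) (S j)) (snd uv (letter_op d (X n) a (fst uv (eb j))))).
  { intro n. destruct (make_unitary (letter_op d (X n)) (S d) d (eb 0)) as [u [v [H1 [_ H3]]]].
    - intros. apply letter_op_ok; auto. lia.
    - lia.
    - unfold letter_op. rewrite Nat.eqb_refl. auto.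
    - apply l2_eb.
    - rewrite nrm2_eb. lra.
    - exists (u, v). simpl. auto. }
  destruct (choice_fun _ Hper) as [f Hf].
  destruct (compactness d (fun n => conj_tuple (fst (f n)) (snd (f n)) (X n)) c (fun j => Lc (S d) (S j))) as [phi [Y [H1 [H2 H3]]]].
  - intro n. apply (conj_tuple_ok d _ _ (X n) c); auto. apply Hf.
  - intro n. apply (conj_tuple_ok d _ _ (X n) c); auto. apply Hf.
  - intros n i j Hi. unfold conj_tuple. destruct (Hf n) as [_ Hs]. specialize (Hs i j ltac:(lia)).
    unfold letter_op in Hs. replace (Nat.eqb i d) with false in Hs by (symmetry; apply Nat.eqb_neq; lia). auto.
  - exists (fun n => fst (f n)), (fun n => snd (f n)), phi, Y. split. intro; apply Hf. auto. Qed.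

Lemma op_scale : forall T a y, is_op T -> l2 y -> T (vscale a y) = vscale a (T y).
Proof. intros. apply functional_extensionality; intro k.
  pose proof (proj1 H a y vzero H0 l2_zero k).
  replace (vadd (vscale a y) vzero) with (vscale a y) in H1.
  rewrite H1. unfold vadd. rewrite op_zero; auto. unfold vscale, Cadd, C0; apply Cext; simpl; ring.
  apply functional_extensionality; intro; unfold vadd, vzero, C0, Cadd; apply Cext; simpl; ring. Qed.

Lemma witness : forall d H, is_tuple d H -> tnorm_eq d H 1 ->
  exists i x, (i < d)%nat /\ l2 x /\ nrm2 x <> 0 /\ ~ vnorm_le (H i (normz x)) (1/2).
Proof. intros d H HH [_ Hmin]. apply NNPP. intro Hn.
  assert (tnorm_le d H (1/2)).
  { intros i Hi x r Hx. assert (Hl : l2 x) by (eapply vnorm_le_l2; eauto).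
    destruct (proj1 (vnorm_le_iff x r Hl) Hx) as [Hr Hnr].
    destruct (Req_EM_T (nrm2 x) 0) as [E|E].
    - replace x with vzero. replace (H i vzero) with vzero. apply vnorm_zero. lra.
      apply functional_extensionality; intro; symmetry; apply op_zero; auto.
      apply functional_extensionality; intro k. symmetry. apply nrm2_zero_pt; auto.
    - assert (Hv : vnorm_le (H i (normz x)) (1/2)).
      { apply NNPP. intro. apply Hn. exists i, x. auto. }
      assert (Hpos : 0 < nrm2 x) by (pose proof (nrm2_ge0 x Hl); lra).
      assert (Hs : 0 < sqrt (nrm2 x)) by (apply sqrt_lt_R0; auto).
      assert (Ex : x = vscale (sqrt (nrm2 x), 0) (normz x)).
      { apply functional_extensionality; intro k. unfold normz, vscale, Cmul; simpl. apply Cext; simpl; field; lra. }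
      rewrite Ex, op_scale; auto. 2: unfold normz; apply l2_scale; auto.
      apply vnorm_mono with (sqrt (nrm2 x) * (1/2)).
      apply vnorm_scale; auto. lra. unfold Cnorm2; simpl. rewrite sqrt_sqrt; lra.
      assert (sqrt (nrm2 x) <= r). { rewrite <- (sqrt_Rsqr r) by auto. apply sqrt_le_1_alt. unfold Rsqr; auto. }
      lra. }
  specialize (Hmin _ H0). lra. Qed.

Definition Tii (d : nat) (X : tuple) (Hn : tuple) : tuple :=
  fun a => if Nat.ltb a d then X a else if Nat.ltb a (2 * d) then Hn (a - d)%nat else Mshift.

Lemma part_ii : forall d (X : tuple) (Hs : nat -> tuple),
     is_tuple d X -> (forall n, is_tuple d (Hs n)) -> (forall n, tnorm_eq d (Hs n) 1) ->
     exists (W Wa : nat -> op) (phi : nat -> nat) (X' H' : tuple),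
       (forall n, is_unitary (W n) (Wa n)) /\
       is_tuple d X' /\ is_tuple d H' /\
       (exists i x k, (i < d)%nat /\ l2 x /\ H' i x k <> C0) /\
       strictly_incr phi /\
       sot_conv_sub d (fun n => conj_tuple (W n) (Wa n) X) phi X' /\
       sot_conv_sub d (fun n => conj_tuple (W n) (Wa n) (Hs n)) phi H'.
Proof. intros d X Hs HX HH Heq.
  assert (Hd : (0 < d)%nat).
  { destruct d. exfalso. destruct (Heq 0%nat) as [_ Hm]. assert (1 <= 0) by (apply Hm; intros i Hi; lia). lra. lia. }
  destruct (tuple_bound d X HX) as [cX [HcX HbX]].
  set (c := Rmax cX 1).
  assert (HTop : forall n a, (a < S (2 * d))%nat -> is_op (Tii d X (Hs n) a) /\ opnorm_le (Tii d X (Hs n) a) c).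
  { intros n a Ha. unfold Tii. destruct (Nat.ltb a d) eqn:E1. apply Nat.ltb_lt in E1.
    split. apply HX; auto. apply opnorm_mono with cX. apply HbX; auto. apply Rmax_l.
    destruct (Nat.ltb a (2*d)) eqn:E2. apply Nat.ltb_ge in E1. apply Nat.ltb_lt in E2.
    split. apply HH; lia. apply opnorm_mono with 1. apply (proj1 (Heq n)). lia. apply Rmax_r.
    split. apply Mshift_op. apply opnorm_mono with 1. 2: apply Rmax_r.
    intros x r [Hr Hx]. split. lra. intro m. rewrite Rmult_1_l. destruct m. simpl. unfold Cnorm2, C0; simpl. nra.
    rewrite Mshift_sum. auto. }
  assert (Hper : forall n, exists q : nat * vec * op * op,
     let '(i, x, u, v) := q in
     (i < d)%nat /\ l2 x /\ ~ vnorm_le (Hs n i (normz x)) (1/2) /\ is_unitary u v /\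
     (forall k, u (eb 0) k = normz x k) /\
     forall a j, (a < S (2 * d))%nat -> in_span_first (Lc (S (2*d)) (S j)) (v (Tii d X (Hs n) a (u (eb j))))).
  { intro n. destruct (witness d (Hs n) (HH n) (Heq n)) as [i [x [Hi [Hx [Hn Hnv]]]]].
    assert (HT1 : forall a, (a < S (2*d))%nat -> is_op (Tii d X (Hs n) a)) by (intros; apply HTop; auto).
    assert (HT2 : Tii d X (Hs n) (2*d)%nat = Mshift).
    { unfold Tii. replace (Nat.ltb (2*d) d) with false by (symmetry; apply Nat.ltb_ge; lia).
      rewrite Nat.ltb_irrefl. auto. }
    destruct (make_unitary (Tii d X (Hs n)) (S (2*d)) (2*d) x HT1 ltac:(lia) HT2 Hx Hn) as [u [v [H1 [H2 H3]]]].
    exists (i, x, u, v). simpl. auto 10. }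
  destruct (choice_fun _ Hper) as [f Hf].
  set (W := fun n => let '(_, _, u, _) := f n in u).
  set (Wa := fun n => let '(_, _, _, v) := f n in v).
  set (iw := fun n => let '(i, _, _, _) := f n in i).
  set (xw := fun n => let '(_, x, _, _) := f n in x).
  assert (Hf' : forall n, (iw n < d)%nat /\ l2 (xw n) /\ ~ vnorm_le (Hs n (iw n) (normz (xw n))) (1/2) /\ is_unitary (W n) (Wa n) /\
     (forall k, W n (eb 0) k = normz (xw n) k) /\
     forall a j, (a < S (2 * d))%nat -> in_span_first (Lc (S (2*d)) (S j)) (Wa n (Tii d X (Hs n) a (W n (eb j))))).
  { intro n. specialize (Hf n). unfold W, Wa, iw, xw. destruct (f n) as [[[i x] u] v]. auto. }
  destruct (compactness (2*d) (fun n => conj_tuple (W n) (Wa n) (Tii d X (Hs n))) c (fun j => Lc (S (2*d)) (S j)))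
    as [phi [Y [Hphi [HY Hsot]]]].
  - intros n a Ha. apply (conj_op (W n) (Wa n) (Tii d X (Hs n) a) c). apply Hf'. apply HTop; lia. apply HTop; lia.
  - intros n a Ha. apply (conj_op (W n) (Wa n) (Tii d X (Hs n) a) c). apply Hf'. apply HTop; lia. apply HTop; lia.
  - intros n a j Ha. unfold conj_tuple. apply Hf'. lia.
  - exists W, Wa, phi, Y, (fun i => Y (i + d)%nat).
    split. intro; apply Hf'. split.
    { intros i Hi. apply HY. lia. } split.
    { intros i Hi. apply HY. lia. } split.
    + apply NNPP. intro Hcon.
      assert (Hz : forall i k, (i < d)%nat -> Y (i + d)%nat (eb 0) k = C0).
      { intros. apply NNPP. intro. apply Hcon. exists i, (eb 0), k. split; auto. split; auto. apply l2_eb. }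
      destruct (exN_fin d (fun i N => forall n, (N <= n)%nat ->
          vnorm_le (vsub (conj_tuple (W (phi n)) (Wa (phi n)) (Tii d X (Hs (phi n))) (i + d)%nat (eb 0)) (Y (i + d)%nat (eb 0))) (1/4))) as [N HN].
      { intros. apply H0. lia. }
      { intros i Hi. apply (Hsot (i + d)%nat ltac:(lia) (eb 0) (l2_eb 0) (1/4)). lra. }
      set (n := phi N). destruct (Hf' n) as [Hi [Hxl [Hnv [Hun [Hu0 _]]]]].
      specialize (HN (iw n) Hi N (le_n _)). fold n in HN.
      apply Hnv. apply vnorm_mono with (1/4). 2: lra.
      replace (vsub (conj_tuple (W n) (Wa n) (Tii d X (Hs n)) (iw n + d)%nat (eb 0)) (Y (iw n + d)%nat (eb 0)))
        with (Wa n (Hs n (iw n) (normz (xw n)))) in HN.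
      * assert (Hl : l2 (Hs n (iw n) (normz (xw n)))) by (apply is_op_l2; [apply HH; auto | unfold normz; apply l2_scale; auto]).
        exact (proj1 (v_iso (W n) (Wa n) _ (1/4) Hun Hl) HN).
      * apply functional_extensionality; intro k. unfold vsub. rewrite Hz by auto. unfold conj_tuple, Tii.
        replace (Nat.ltb (iw n + d) d) with false by (symmetry; apply Nat.ltb_ge; lia).
        replace (Nat.ltb (iw n + d) (2 * d)) with true by (symmetry; apply Nat.ltb_lt; lia).
        replace (iw n + d - d)%nat with (iw n) by lia.
        replace (W n (eb 0)) with (normz (xw n)) by (apply functional_extensionality; intro; symmetry; apply Hu0).
        unfold Cadd, Copp, C0; apply Cext; simpl; ring.
    + split. auto. split.
      * intros i Hi x Hx eps He. destruct (Hsot i ltac:(lia) x Hx eps He) as [N HN]. exists N. intros n Hn.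
        specialize (HN n Hn). unfold conj_tuple, Tii in HN |- *.
        replace (Nat.ltb i d) with true in HN by (symmetry; apply Nat.ltb_lt; auto). auto.
      * intros i Hi x Hx eps He. destruct (Hsot (i + d)%nat ltac:(lia) x Hx eps He) as [N HN]. exists N. intros n Hn.
        specialize (HN n Hn). unfold conj_tuple, Tii in HN |- *.
        replace (Nat.ltb (i + d) d) with false in HN by (symmetry; apply Nat.ltb_ge; lia).
        replace (Nat.ltb (i + d) (2 * d)) with true in HN by (symmetry; apply Nat.ltb_lt; lia).
        replace (i + d - d)%nat with i in HN by lia. auto.
Qed.

Theorem lemma4p5 :
  forall d : nat,
  (* (i) *)
  (forall X : nat -> tuple,
     (forall n, is_tuple d (X n)) ->
     (exists c, forall n, tnorm_le d (X n) c) ->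
     (forall (u v : nat -> op),
        (forall n, shift_form_unitary d (X n) (u n) (v n)) ->
        exists (phi : nat -> nat) (Y : tuple),
          strictly_incr phi /\ is_tuple d Y /\
          sot_conv_sub d (fun n => conj_tuple (u n) (v n) (X n)) phi Y)
     /\
     (exists (U V : nat -> op) (phi : nat -> nat) (Y : tuple),
        (forall n, is_unitary (U n) (V n)) /\
        strictly_incr phi /\ is_tuple d Y /\
        sot_conv_sub d (fun n => conj_tuple (U n) (V n) (X n)) phi Y))
  /\
  (* (ii) *)
  (forall (X : tuple) (Hs : nat -> tuple),
     is_tuple d X ->
     (forall n, is_tuple d (Hs n)) ->
     (forall n, tnorm_eq d (Hs n) 1) ->
     exists (W Wa : nat -> op) (phi : nat -> nat) (X' H' : tuple),
       (forall n, is_unitary (W n) (Wa n)) /\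
       is_tuple d X' /\ is_tuple d H' /\
       (exists i x k, (i < d)%nat /\ l2 x /\ H' i x k <> C0) /\
       strictly_incr phi /\
       sot_conv_sub d (fun n => conj_tuple (W n) (Wa n) X) phi X' /\
       sot_conv_sub d (fun n => conj_tuple (W n) (Wa n) (Hs n)) phi H').
Proof.
  intro d. split.
  - intros X HX Hc. split.
    + intros u v Hs. apply part_i_a; auto.
    + apply part_i_b; auto.
  - intros X Hs HX HH Heq. apply part_ii; auto.
Qed.
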